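(* Fix $0<\beta<1$. For every general channel $\mathbf W$, every sequence of cost functions $\mathbf c=\{c_n\}$ and every $K$ with $\mathcal X_{n,c,K}\ne\emptyset$ for all $n$, and all reals $R_1,R_2$, \[ C_p(R_2,R_1\mid\mathbf W,\mathbf c,K)=\inf_{\mathbf P\in\mathcal P_{c,K}}\lim_{\gamma\downarrow0}I_p(R_2-\gamma,R_1\mid\mathbf P,\mathbf W)=\inf_{\mathbf P\in\mathcal P_{c,K}}\sup_{\mathbf Q}\lim_{\gamma\downarrow0}J_p(R_2-\gamma,R_1\mid\mathbf P,\mathbf Q,\mathbf W), \] and for every $0\le\epsilon<1$, \[ C(\epsilon,R_1\mid\mathbf W,\mathbf c,K)=\sup_{\mathbf P\in\mathcal P_{c,K}}I(\epsilon,R_1\mid\mathbf P,\mathbf W)=\sup_{\mathbf P\in\mathcal P_{c,K}}\inf_{\mathbf Q}J(\epsilon,R_1\mid\mathbf P,\mathbf Q,\mathbf W). \]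
   Context: A general channel $\mathbf W=\{W^n\}$: finite (or countable) sets $\mathcal X_n,\mathcal Y_n$, distributions $W^n_x$ on $\mathcal Y_n$. $c_n:\mathcal X_n\to\mathbb R$; $\mathcal X_{n,c,K}=\{x\in\mathcal X_n:c_n(x)\le nK\}$. $\mathcal P_{c,K}$ is the set of sequences $\mathbf P=\{P^n\}$ of distributions on $\mathcal X_n$ with $\mathrm{supp}(P^n)\subset\mathcal X_{n,c,K}$; $\mathbf Q=\{Q^n\}$ ranges over sequences of distributions on $\mathcal Y_n$; $W^n_{P^n}=\sum_xP^n(x)W^n_x$; logs natural. $I_p(R_2,R_1|\mathbf P,\mathbf W)=\limsup_n\sum_xP^n(x)W^n_x\{\frac1{n^\beta}(\log\frac{W^n_x(y)}{W^n_{P^n}(y)}-nR_1)<R_2\}$, $I(\epsilon,R_1|\mathbf P,\mathbf W)=\sup\{R_2:I_p(R_2,R_1|\mathbf P,\mathbf W)\le\epsilon\}$; $J_p,J$ are the same with $W^n_{P^n}$ replaced by $Q^n$. A code $\Phi=(N,\phi,\{\mathcal D_i\})$ for $W^n$: $\phi:\{1..N\}\to\mathcal X_n$, disjoint $\mathcal D_i\subset\mathcal Y_n$, $|\Phi|=N$, $\mathrm{supp}(\Phi)=\{\phi(i)\}$, $P_{e,W^n}(\Phi)=\frac1N\sum_i(1-W^n_{\phi(i)}(\mathcal D_i))$. Over code sequences with $\mathrm{supp}(\Phi_n)\subset\mathcal X_{n,c,K}$: $C_p(R_2,R_1|\mathbf W,\mathbf c,K)=\inf\{\limsup_nP_{e,W^n}(\Phi_n):\liminf_n\frac1{n^\beta}(\log|\Phi_n|-nR_1)\ge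 R_2\}$, $C(\epsilon,R_1|\mathbf W,\mathbf c,K)=\sup\{\liminf_n\frac1{n^\beta}(\log|\Phi_n|-nR_1):\limsup_nP_{e,W^n}(\Phi_n)\le\epsilon\}$. *)

(* Defs.v *)
From Stdlib Require Import Reals Lra Classical ClassicalEpsilon.
Open Scope R_scope.

Inductive ER : Type := Fin (r : R) | PInf | NInf.

Definition leER (a b : ER) : Prop :=
  match a, b with
  | NInf, _ => True
  | _, PInf => True
  | Fin x, Fin y => x <= y
  | _, _ => False
  end.

(* real part; used only for quantities known to be finite (in [0,1]) *)
Definition to_R (a : ER) : R := match a with Fin r => r | _ => 0 end.

Definition is_lubER (S : ER -> Prop) (a : ER) : Prop :=
  (forall x, S x -> leER x a) /\ (forall b, (forall x, S x -> leER x b) -> leER a b).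
Definition is_glbER (S : ER -> Prop) (a : ER) : Prop :=
  (forall x, S x -> leER a x) /\ (forall b, (forall x, S x -> leER b x) -> leER b a).

Definition supER (S : ER -> Prop) : ER := epsilon (inhabits PInf) (is_lubER S).
Definition infER (S : ER -> Prop) : ER := epsilon (inhabits PInf) (is_glbER S).

Definition limsupER (u : nat -> R) : ER :=
  infER (fun a => exists n, a = supER (fun b => exists k, (n <= k)%nat /\ b = Fin (u k))).
Definition liminfER (u : nat -> R) : ER :=
  supER (fun a => exists n, a = infER (fun b => exists k, (n <= k)%nat /\ b = Fin (u k))).

Definition lim_down0 (g : R -> R) : R :=
  epsilon (inhabits 0) (fun L => forall eps, 0 < eps -> exists delta, 0 < delta /\
     forall gamma, 0 < gamma < delta -> Rabs (g gamma - L) < eps).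

(* Alphabets X_n, Y_n are encoded as nat (any finite or countable set embeds). *)
Definition ssum (f : nat -> R) : R := epsilon (inhabits 0) (fun l => infinite_sum f l).

Fixpoint fsum (N : nat) (f : nat -> R) : R :=
  match N with O => 0 | S m => fsum m f + f m end.

Definition is_dist (p : nat -> R) : Prop := (forall y, 0 <= p y) /\ infinite_sum p 1.

(* a general channel W n x y = W^n_x(y) *)
Definition is_channel (W : nat -> nat -> nat -> R) : Prop := forall n x, is_dist (W n x).

Definition in_cost (c : nat -> nat -> R) (K : R) (n x : nat) : Prop := c n x <= INR n * K.

Definition in_Pc (c : nat -> nat -> R) (K : R) (P : nat -> nat -> R) : Prop :=
  forall n, is_dist (P n) /\ (forall x, P n x <> 0 -> in_cost c K n x).

Definition is_dist_seq (Q : nat -> nat -> R) : Prop := forall n, is_dist (Q n).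

Definition outdist (W : nat -> nat -> nat -> R) (P : nat -> nat -> R) (n y : nat) : R :=
  ssum (fun x => P n x * W n x y).

(* indicator of  (1/n^beta)(log(a/b) - n R1) < R2 ; log(a/0) = +infinity for a > 0 *)
Definition ind_below (beta R1 R2 : R) (n : nat) (a b : R) : R :=
  if Rlt_dec 0 b then
    if Rlt_dec ((ln (a / b) - INR n * R1) / Rpower (INR n) beta) R2 then 1 else 0
  else 0.

Definition prob_below (beta R1 R2 : R) (W : nat -> nat -> nat -> R)
  (P : nat -> nat -> R) (V : nat -> nat -> R) (n : nat) : R :=
  ssum (fun x => P n x * ssum (fun y => W n x y * ind_below beta R1 R2 n (W n x y) (V n y))).

Definition Ip (beta R2 R1 : R) (P : nat -> nat -> R) (W : nat -> nat -> nat -> R) : R :=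
  to_R (limsupER (prob_below beta R1 R2 W P (outdist W P))).
Definition Jp (beta R2 R1 : R) (P Q : nat -> nat -> R) (W : nat -> nat -> nat -> R) : R :=
  to_R (limsupER (prob_below beta R1 R2 W P Q)).

Definition Iinf (beta eps R1 : R) (P : nat -> nat -> R) (W : nat -> nat -> nat -> R) : ER :=
  supER (fun a => exists R2, a = Fin R2 /\ Ip beta R2 R1 P W <= eps).
Definition Jinf (beta eps R1 : R) (P Q : nat -> nat -> R) (W : nat -> nat -> nat -> R) : ER :=
  supER (fun a => exists R2, a = Fin R2 /\ Jp beta R2 R1 P Q W <= eps).

(* messages 0..N-1, encoder phi, decoding sets D i (as boolean predicates on Y_n) *)
Record code : Type := Code { cN : nat; cphi : nat -> nat; cD : nat -> nat -> bool }.

Definition valid_code (c : nat -> nat -> R) (K : R) (n : nat) (F : code) : Prop :=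
  (0 < cN F)%nat /\
  (forall i j y, (i < cN F)%nat -> (j < cN F)%nat -> i <> j ->
       cD F i y = true -> cD F j y = false) /\
  (forall i, (i < cN F)%nat -> in_cost c K n (cphi F i)).

Definition Perr (W : nat -> nat -> nat -> R) (n : nat) (F : code) : R :=
  / INR (cN F) *
  fsum (cN F) (fun i => 1 - ssum (fun y => if cD F i y then W n (cphi F i) y else 0)).

Definition rate2 (beta R1 : R) (n : nat) (F : code) : R :=
  (ln (INR (cN F)) - INR n * R1) / Rpower (INR n) beta.

Definition Cp (beta R2 R1 : R) (W : nat -> nat -> nat -> R) (c : nat -> nat -> R) (K : R) : ER :=
  infER (fun a => exists Phi : nat -> code,
     (forall n, valid_code c K n (Phi n)) /\
     leER (Fin R2) (liminfER (fun n => rate2 beta R1 n (Phi n))) /\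
     a = limsupER (fun n => Perr W n (Phi n))).

Definition Ccap (beta eps R1 : R) (W : nat -> nat -> nat -> R) (c : nat -> nat -> R) (K : R) : ER :=
  supER (fun a => exists Phi : nat -> code,
     (forall n, valid_code c K n (Phi n)) /\
     leER (limsupER (fun n => Perr W n (Phi n))) (Fin eps) /\
     a = liminfER (fun n => rate2 beta R1 n (Phi n))).

(* Main.v *)
Require Import Defs.
From Stdlib Require Import Reals Lra Lia ZArith Classical ClassicalEpsilon FunctionalExtensionality.
Open Scope R_scope.

Lemma leER_refl a : leER a a.
Proof. destruct a; simpl; auto; lra. Qed.

Lemma leER_trans a b c : leER a b -> leER b c -> leER a c.
Proof. destruct a, b, c; simpl; auto; try tauto; lra. Qed.

Lemma leER_antisym a b : leER a b -> leER b a -> a = b.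
Proof. destruct a, b; simpl; try tauto; intros; f_equal; lra. Qed.

Lemma lubER_exists (S : ER -> Prop) : exists a, is_lubER S a.
Proof.
  destruct (classic (S PInf)) as [HP|HP].
  { exists PInf; split. intros x _; destruct x; simpl; auto.
    intros b Hb; apply Hb; auto. }
  destruct (classic (exists r, S (Fin r))) as [[r0 Hr0]|HF].
  - destruct (classic (bound (fun r => S (Fin r)))) as [Hb|Hb].
    + destruct (completeness _ Hb (ex_intro _ r0 Hr0)) as [m [Hm1 Hm2]].
      exists (Fin m); split.
      * intros x Hx; destruct x; simpl; auto; try (apply Hm1; auto); exfalso; apply HP; auto.
      * intros b Hb'; destruct b; simpl; auto.
        -- apply Hm2; intros x Hx; apply (Hb' (Fin x) Hx).
        -- apply (Hb' _ Hr0).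
    + exists PInf; split. intros x _; destruct x; simpl; auto.
      intros b Hb'; destruct b; simpl; auto.
      * apply Hb; exists r; intros x Hx; apply (Hb' (Fin x) Hx).
      * apply (Hb' _ Hr0).
  - exists NInf; split.
    + intros x Hx; destruct x; simpl; auto; exfalso; solve [apply HF; eauto | apply HP; auto].
    + intros; simpl; auto.
Qed.

Lemma glbER_exists (S : ER -> Prop) : exists a, is_glbER S a.
Proof.
  destruct (classic (S NInf)) as [HP|HP].
  { exists NInf; split. intros x _; destruct x; simpl; auto.
    intros b Hb; apply Hb; auto. }
  destruct (classic (exists r, S (Fin r))) as [[r0 Hr0]|HF].
  - set (E := fun r => S (Fin (- r))).
    destruct (classic (bound E)) as [Hb|Hb].
    + assert (HE : exists x, E x) by (exists (- r0); unfold E; rewrite Ropp_involutive; auto).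
      destruct (completeness _ Hb HE) as [m [Hm1 Hm2]].
      exists (Fin (- m)); split.
      * intros x Hx; destruct x; simpl; auto.
        assert (- r <= m) by (apply Hm1; unfold E; rewrite Ropp_involutive; auto). lra.
      * intros b Hb'; destruct b; simpl; auto.
        -- assert (m <= - r) by (apply Hm2; intros x Hx; specialize (Hb' _ Hx); simpl in Hb'; lra). lra.
        -- apply (Hb' _ Hr0).
    + exists NInf; split. intros x _; destruct x; simpl; auto.
      intros b Hb'; destruct b; simpl; auto.
      * apply Hb; exists (- r); intros x Hx; specialize (Hb' _ Hx); simpl in Hb'; lra.
      * apply (Hb' _ Hr0).
  - exists PInf; split.
    + intros x Hx; destruct x; simpl; auto; exfalso; solve [apply HF; eauto | apply HP; auto].
    + intros b _; destruct b; simpl; auto.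
Qed.

Lemma supER_spec S : is_lubER S (supER S).
Proof. unfold supER. apply epsilon_spec. apply lubER_exists. Qed.
Lemma infER_spec S : is_glbER S (infER S).
Proof. unfold infER. apply epsilon_spec. apply glbER_exists. Qed.

Lemma sup_ub S x : S x -> leER x (supER S).
Proof. intros; apply (proj1 (supER_spec S)); auto. Qed.
Lemma sup_least S b : (forall x, S x -> leER x b) -> leER (supER S) b.
Proof. intros; apply (proj2 (supER_spec S)); auto. Qed.
Lemma inf_lb S x : S x -> leER (infER S) x.
Proof. intros; apply (proj1 (infER_spec S)); auto. Qed.
Lemma inf_greatest S b : (forall x, S x -> leER b x) -> leER b (infER S).
Proof. intros; apply (proj2 (infER_spec S)); auto. Qed.

Lemma leER_approx (a b : ER) :
  (forall r, leER (Fin r) a -> forall g, 0 < g -> leER (Fin (r - g)) b) -> leER a b.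
Proof.
  intros H. destruct a as [x| |]; simpl; auto.
  - destruct b as [y| |]; simpl; auto.
    + destruct (Rle_dec x y); auto.
      specialize (H x (Rle_refl x) ((x - y)/2) ltac:(lra)). simpl in H. lra.
    + specialize (H x (Rle_refl x) 1 ltac:(lra)). simpl in H. auto.
  - destruct b as [y| |]; simpl; auto.
    + specialize (H (y + 2) I 1 ltac:(lra)). simpl in H. lra.
    + specialize (H 0 I 1 ltac:(lra)). simpl in H. auto.
Qed.

Lemma leER_total a b : leER a b \/ leER b a.
Proof. destruct a, b; simpl; auto. lra. Qed.

Lemma leER_Fin_eps x a : (forall g, 0 < g -> leER x (Fin (a + g))) -> leER x (Fin a).
Proof.
  intros H. destruct x as [y| |]; simpl; auto.
  - destruct (Rle_dec y a); auto. specialize (H ((y - a)/2) ltac:(lra)); simpl in H; lra.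
  - apply (H 1); lra.
Qed.

Lemma Fin_eps_le x a : (forall g, 0 < g -> leER (Fin (a - g)) x) -> leER (Fin a) x.
Proof.
  intros H. destruct x as [y| |]; simpl; auto.
  - destruct (Rle_dec a y); auto. specialize (H ((a - y)/2) ltac:(lra)); simpl in H; lra.
  - apply (H 1); lra.
Qed.

Definition tailS (u : nat -> R) n := fun b => exists k, (n <= k)%nat /\ b = Fin (u k).
Definition tailI (u : nat -> R) n := infER (tailS u n).

Lemma limsup_ev u a : leER (limsupER u) (Fin a) ->
  forall g, 0 < g -> exists N, forall n, (N <= n)%nat -> u n <= a + g.
Proof.
  intros H g Hg.
  assert (exists N, leER (supER (tailS u N)) (Fin (a + g))) as [N HN].
  { apply NNPP; intro C.
    assert (leER (Fin (a + g)) (limsupER u)).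
    { unfold limsupER. apply inf_greatest. intros x [n ->].
      destruct (leER_total (supER (fun b => exists k, (n <= k)%nat /\ b = Fin (u k))) (Fin (a+g))); auto.
      exfalso; apply C; exists n; auto. }
    pose proof (leER_trans _ _ _ H0 H). simpl in H1; lra. }
  exists N; intros n Hn.
  assert (leER (Fin (u n)) (Fin (a + g))).
  { eapply leER_trans; [|exact HN]. apply sup_ub. exists n; auto. }
  simpl in H0; auto.
Qed.

Lemma limsup_le u a : (forall g, 0 < g -> exists N, forall n, (N <= n)%nat -> u n <= a + g) ->
  leER (limsupER u) (Fin a).
Proof.
  intros H. apply leER_Fin_eps. intros g Hg. destruct (H g Hg) as [N HN].
  unfold limsupER. eapply leER_trans. apply inf_lb. exists N; reflexivity.
  apply sup_least. intros x [k [Hk ->]]. simpl. auto.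
Qed.

Lemma liminf_ev u a : leER (Fin a) (liminfER u) ->
  forall g, 0 < g -> exists N, forall n, (N <= n)%nat -> a - g <= u n.
Proof.
  intros H g Hg.
  assert (exists N, leER (Fin (a - g)) (infER (tailS u N))) as [N HN].
  { apply NNPP; intro C.
    assert (leER (liminfER u) (Fin (a - g))).
    { unfold liminfER. apply sup_least. intros x [n ->].
      destruct (leER_total (infER (fun b => exists k, (n <= k)%nat /\ b = Fin (u k))) (Fin (a-g))); auto.
      exfalso; apply C; exists n; auto. }
    pose proof (leER_trans _ _ _ H H0). simpl in H1; lra. }
  exists N; intros n Hn.
  assert (leER (Fin (a - g)) (Fin (u n))).
  { eapply leER_trans; [exact HN|]. apply inf_lb. exists n; auto. }
  simpl in H0; auto.
Qed.

Lemma liminf_ge u a : (forall g, 0 < g -> exists N, forall n, (N <= n)%nat -> a - g <= u n) ->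
  leER (Fin a) (liminfER u).
Proof.
  intros H. apply Fin_eps_le. intros g Hg. destruct (H g Hg) as [N HN].
  unfold liminfER. eapply leER_trans; [| apply sup_ub; exists N; reflexivity].
  apply inf_greatest. intros x [k [Hk ->]]. simpl. auto.
Qed.

Lemma limsup_bdd u lo hi : (forall n, lo <= u n <= hi) ->
  exists q, limsupER u = Fin q /\ lo <= q <= hi.
Proof.
  intros Hb.
  assert (Hs : forall n, exists q, supER (tailS u n) = Fin q /\ lo <= q <= hi).
  { intros n.
    assert (H1 : leER (supER (tailS u n)) (Fin hi)).
    { apply sup_least. intros x [k [_ ->]]. simpl. apply Hb. }
    assert (H2 : leER (Fin (u n)) (supER (tailS u n))).
    { apply sup_ub. exists n; auto. }
    destruct (supER (tailS u n)) as [q| |]; simpl in *; try tauto.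
    exists q; split; auto. specialize (Hb n); lra. }
  assert (H1 : leER (Fin lo) (limsupER u)).
  { apply inf_greatest. intros x [n ->]. destruct (Hs n) as [q [Hq Hq']].
    unfold tailS in Hq. rewrite Hq. simpl; lra. }
  assert (H2 : leER (limsupER u) (Fin hi)).
  { eapply leER_trans. apply inf_lb. exists 0%nat; reflexivity.
    destruct (Hs 0%nat) as [q [Hq Hq']]. unfold tailS in Hq. rewrite Hq. simpl; lra. }
  destruct (limsupER u) as [q| |]; simpl in *; try tauto. exists q; split; auto.
Qed.

Definition lsR (u : nat -> R) := to_R (limsupER u).

Lemma lsR_eq u lo hi : (forall n, lo <= u n <= hi) -> limsupER u = Fin (lsR u) /\ lo <= lsR u <= hi.
Proof. intros H. destruct (limsup_bdd u lo hi H) as [q [Hq Hq']]. unfold lsR; rewrite Hq; simpl; auto. Qed.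

Lemma lsR_ev u lo hi : (forall n, lo <= u n <= hi) ->
  forall g, 0 < g -> exists N, forall n, (N <= n)%nat -> u n <= lsR u + g.
Proof. intros H. apply limsup_ev. rewrite (proj1 (lsR_eq u lo hi H)). apply leER_refl. Qed.

Lemma lsR_le u lo hi a : (forall n, lo <= u n <= hi) ->
  (forall g, 0 < g -> exists N, forall n, (N <= n)%nat -> u n <= a + g) -> lsR u <= a.
Proof.
  intros H H'. pose proof (limsup_le u a H'). rewrite (proj1 (lsR_eq u lo hi H)) in H0. exact H0.
Qed.

Definition limspec (g : R -> R) L := forall eps, 0 < eps -> exists delta, 0 < delta /\
     forall gamma, 0 < gamma < delta -> Rabs (g gamma - L) < eps.

Lemma limspec_unique g L1 L2 : limspec g L1 -> limspec g L2 -> L1 = L2.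
Proof.
  intros H1 H2. destruct (Req_dec L1 L2) as [|Hne]; auto. exfalso.
  set (e := Rabs (L1 - L2) / 2).
  assert (He : 0 < e) by (unfold e; assert (0 < Rabs (L1 - L2)) by (apply Rabs_pos_lt; lra); lra).
  destruct (H1 e He) as [d1 [Hd1 H1']]. destruct (H2 e He) as [d2 [Hd2 H2']].
  set (gm := Rmin d1 d2 / 2).
  assert (Hg : 0 < gm) by (unfold gm; pose proof (Rmin_glb_lt d1 d2 0 Hd1 Hd2); lra).
  assert (gm < d1) by (unfold gm; pose proof (Rmin_l d1 d2); pose proof (Rmin_glb_lt d1 d2 0 Hd1 Hd2); lra).
  assert (gm < d2) by (unfold gm; pose proof (Rmin_r d1 d2); pose proof (Rmin_glb_lt d1 d2 0 Hd1 Hd2); lra).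
  specialize (H1' gm ltac:(lra)). specialize (H2' gm ltac:(lra)).
  assert (Rabs (L1 - L2) <= Rabs (g gm - L1) + Rabs (g gm - L2)).
  { replace (L1 - L2) with (-(g gm - L1) + (g gm - L2)) by ring.
    eapply Rle_trans. apply Rabs_triang. rewrite Rabs_Ropp. lra. }
  unfold e in *. lra.
Qed.

Lemma lim_down0_mono (g : R -> R) (B : R) :
  (forall g1 g2, 0 < g1 <= g2 -> g g2 <= g g1) -> (forall gm, 0 < gm -> g gm <= B) ->
  (forall gm, 0 < gm -> g gm <= lim_down0 g) /\
  (forall b, (forall gm, 0 < gm -> g gm <= b) -> lim_down0 g <= b).
Proof.
  intros Hmono HB.
  set (E := fun v => exists gm, 0 < gm /\ v = g gm).
  assert (Hb : bound E) by (exists B; intros v [gm [Hgm ->]]; auto).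
  assert (Hne : exists v, E v) by (exists (g 1); exists 1; split; auto; lra).
  destruct (completeness E Hb Hne) as [s [Hs1 Hs2]].
  assert (Hspec : limspec g s).
  { intros eps Heps.
    assert (exists gm, 0 < gm /\ s - eps < g gm) as [g0 [Hg0 Hg0']].
    { apply NNPP; intro C. assert (s <= s - eps); [|lra].
      apply Hs2. intros v [gm [Hgm ->]]. destruct (Rle_dec (g gm) (s - eps)); auto.
      exfalso; apply C; exists gm; split; auto; lra. }
    exists g0; split; auto. intros gm [Hgm Hgm'].
    assert (g gm <= s) by (apply Hs1; exists gm; auto).
    assert (g g0 <= g gm) by (apply Hmono; lra).
    rewrite Rabs_left1; lra. }
  assert (Heq : lim_down0 g = s).
  { apply (limspec_unique g). unfold lim_down0.
    apply (epsilon_spec (inhabits 0) (limspec g)). exists s; exact Hspec. exact Hspec. }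
  rewrite Heq. split.
  - intros gm Hgm; apply Hs1; exists gm; auto.
  - intros b Hb'. apply Hs2. intros v [gm [Hgm ->]]; auto.
Qed.

Lemma isum_cv f l : infinite_sum f l <-> Un_cv (fun n => sum_f_R0 f n) l.
Proof. split; intro H; exact H. Qed.

Lemma ssum_eq f l : infinite_sum f l -> ssum f = l.
Proof.
  intros H. unfold ssum. apply (uniqueness_sum f).
  apply (epsilon_spec (inhabits 0) (fun l => infinite_sum f l)). eauto. auto.
Qed.

Lemma cv_const c : Un_cv (fun _ => c) c.
Proof. intros e He; exists 0%nat; intros; unfold Rdist; rewrite Rminus_diag, Rabs_R0; lra. Qed.

Lemma isum_plus f g a b : infinite_sum f a -> infinite_sum g b ->
  infinite_sum (fun x => f x + g x) (a + b).
Proof.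
  intros Hf Hg. apply isum_cv.
  apply (Un_cv_ext (fun n => sum_f_R0 f n + sum_f_R0 g n)).
  intros; rewrite sum_plus; auto. apply CV_plus; auto.
Qed.

Lemma isum_scal f a c : infinite_sum f a -> infinite_sum (fun x => c * f x) (c * a).
Proof.
  intros Hf. apply isum_cv.
  apply (Un_cv_ext (fun n => c * sum_f_R0 f n)).
  intros; rewrite scal_sum; apply sum_eq; intros; ring.
  apply CV_mult; auto. apply cv_const.
Qed.

Lemma isum_ext f g l : (forall x, f x = g x) -> infinite_sum f l -> infinite_sum g l.
Proof.
  intros E H. apply isum_cv. apply (Un_cv_ext (fun n => sum_f_R0 f n)).
  intros; apply sum_eq; auto. auto.
Qed.

Lemma isum_le f g a b : (forall x, f x <= g x) -> infinite_sum f a -> infinite_sum g b -> a <= b.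
Proof.
  intros H Hf Hg. apply (Rle_cv_lim (Un:=fun n => sum_f_R0 f n) (Vn:=fun n => sum_f_R0 g n)); auto.
  intros; apply sum_Rle; auto.
Qed.

Lemma isum_partial f l n : (forall x, 0 <= f x) -> infinite_sum f l -> sum_f_R0 f n <= l.
Proof. intros H Hf. apply sum_incr; auto. Qed.

Lemma isum_nonneg f l : (forall x, 0 <= f x) -> infinite_sum f l -> 0 <= l.
Proof. intros H Hf. eapply Rle_trans. apply (cond_pos_sum f 0 H). apply isum_partial; auto. Qed.

Lemma isum_bounded f B : (forall x, 0 <= f x) -> (forall n, sum_f_R0 f n <= B) ->
  exists l, infinite_sum f l /\ l <= B.
Proof.
  intros H HB.
  assert (Hg : Un_growing (fun n => sum_f_R0 f n)).
  { intros n; simpl. pose proof (H (S n)); lra. }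
  destruct (growing_cv _ Hg) as [l Hl]. exists B; intros x [n ->]; auto.
  exists l; split; auto.
  apply (Rle_cv_lim (Un:=fun n => sum_f_R0 f n) (Vn:=fun _ => B)); auto. apply cv_const.
Qed.

Lemma isum_comp f g b : (forall x, 0 <= f x <= g x) -> infinite_sum g b ->
  exists a, infinite_sum f a /\ 0 <= a <= b.
Proof.
  intros H Hg.
  destruct (isum_bounded f b) as [a [Ha Hab]].
  intros x; apply H. intros n. eapply Rle_trans; [apply sum_Rle; intros; apply H|].
  apply isum_partial; auto. intros; pose proof (H x); lra.
  exists a; repeat split; auto. apply (isum_nonneg f); auto. intros; apply H.
Qed.

Lemma fsum_S_sum f n : fsum (S n) f = sum_f_R0 f n.
Proof. induction n; simpl in *; auto. ring. rewrite <- IHn. simpl. ring. Qed.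

Lemma fsum_ext N f g : (forall i, (i < N)%nat -> f i = g i) -> fsum N f = fsum N g.
Proof. induction N; simpl; intros; auto. rewrite IHN, H; auto. Qed.

Lemma fsum_le N f g : (forall i, (i < N)%nat -> f i <= g i) -> fsum N f <= fsum N g.
Proof. induction N; simpl; intros; try lra. pose proof (IHN (fun i Hi => H i ltac:(lia))). pose proof (H N ltac:(lia)). lra. Qed.

Lemma fsum_plus N f g : fsum N (fun i => f i + g i) = fsum N f + fsum N g.
Proof. induction N; simpl; [ring|]. rewrite IHN; ring. Qed.

Lemma fsum_scal N f c : fsum N (fun i => c * f i) = c * fsum N f.
Proof. induction N; simpl; [ring|]. rewrite IHN; ring. Qed.

Lemma fsum_const N c : fsum N (fun _ => c) = INR N * c.
Proof. induction N; simpl fsum; [simpl; ring|]. rewrite IHN, S_INR; ring. Qed.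

Lemma fsum_nonneg N f : (forall i, (i < N)%nat -> 0 <= f i) -> 0 <= fsum N f.
Proof. intros H. pose proof (fsum_le N (fun _ => 0) f H). rewrite fsum_const in H0. lra. Qed.

Lemma isum_fsum N (F : nat -> nat -> R) a :
  (forall i, (i < N)%nat -> infinite_sum (F i) (a i)) ->
  infinite_sum (fun x => fsum N (fun i => F i x)) (fsum N a).
Proof.
  induction N; intros H; simpl.
  - apply (isum_ext (fun _ => 0)); auto. intros e He; exists 0%nat; intros.
    rewrite (sum_eq _ (fun _ => 0 * 0)) by (intros; ring). rewrite <- scal_sum.
    unfold Rdist. replace (0 * sum_f_R0 (fun _ => 0) n - 0) with 0 by ring. rewrite Rabs_R0; lra.
  - apply isum_plus; auto.
Qed.

Lemma fsum_extend f M k : (forall x, (M <= x)%nat -> f x = 0) -> fsum (M + k) f = fsum M f.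
Proof. intros H; induction k. rewrite Nat.add_0_r; auto.
  rewrite Nat.add_succ_r. simpl. rewrite IHk, H by lia. ring. Qed.

Lemma isum_finite f M : (forall x, (M <= x)%nat -> f x = 0) -> infinite_sum f (fsum M f).
Proof.
  intros H e He. exists M. intros n Hn.
  assert (sum_f_R0 f n = fsum M f).
  { rewrite <- fsum_S_sum. replace (S n) with (M + (S n - M))%nat by lia. apply fsum_extend; auto. }
  rewrite H0. unfold Rdist; rewrite Rminus_diag, Rabs_R0; lra.
Qed.

Lemma sum_swap (a : nat -> nat -> R) N M :
  sum_f_R0 (fun y => sum_f_R0 (fun x => a x y) N) M = sum_f_R0 (fun x => sum_f_R0 (fun y => a x y) M) N.
Proof.
  induction M; simpl; auto.
  rewrite IHM. rewrite <- sum_plus. apply sum_eq; intros; simpl; auto.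
Qed.

Lemma cv_sum_finite (u : nat -> nat -> R) (b : nat -> R) M :
  (forall y, (y <= M)%nat -> Un_cv (fun N => u N y) (b y)) ->
  Un_cv (fun N => sum_f_R0 (fun y => u N y) M) (sum_f_R0 b M).
Proof.
  induction M; intros H; simpl. apply H; lia.
  apply CV_plus. apply IHM; intros; apply H; lia. apply H; lia.
Qed.

Lemma fubini1 (a : nat -> nat -> R) (A : nat -> R) S :
  (forall x y, 0 <= a x y) -> (forall x, infinite_sum (a x) (A x)) -> infinite_sum A S ->
  exists B : nat -> R, (forall y, infinite_sum (fun x => a x y) (B y)) /\
    exists T, infinite_sum B T /\ T <= S.
Proof.
  intros Ha HA HS.
  assert (HA0 : forall x, 0 <= A x) by (intros; apply (isum_nonneg (a x)); auto).
  assert (Hcol : forall y, exists b, infinite_sum (fun x => a x y) b).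
  { intros y. destruct (isum_bounded (fun x => a x y) S) as [b [Hb _]]; eauto.
    intros n. eapply Rle_trans; [|apply (isum_partial A S n); auto].
    apply sum_Rle; intros. eapply Rle_trans; [|apply (isum_partial (a n0) (A n0) y); auto].
    destruct y; simpl; auto; try lra. pose proof (cond_pos_sum (a n0) y (Ha n0)). lra. }
  destruct (choice _ Hcol) as [B HB]. exists B; split; auto.
  apply isum_bounded.
  - intros y; apply (isum_nonneg (fun x => a x y) (B y)); auto.
  - intros M.
    apply (Rle_cv_lim (Un := fun N => sum_f_R0 (fun y => sum_f_R0 (fun x => a x y) N) M) (Vn := fun _ => S)).
    + intros N. rewrite sum_swap. eapply Rle_trans; [|apply (isum_partial A S N); auto].
      apply sum_Rle; intros. apply isum_partial; auto.
    + apply (cv_sum_finite (fun N y => sum_f_R0 (fun x => a x y) N)). intros; apply HB.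
    + apply cv_const.
Qed.

Lemma fubini (a : nat -> nat -> R) (A : nat -> R) S :
  (forall x y, 0 <= a x y) -> (forall x, infinite_sum (a x) (A x)) -> infinite_sum A S ->
  exists B : nat -> R, (forall y, infinite_sum (fun x => a x y) (B y)) /\ infinite_sum B S.
Proof.
  intros Ha HA HS.
  destruct (fubini1 a A S Ha HA HS) as [B [HB [T [HT HTS]]]].
  destruct (fubini1 (fun y x => a x y) B T) as [A' [HA' [S' [HS' HST]]]]; auto.
  assert (forall x, A' x = A x) by (intros; apply (uniqueness_sum (a x)); auto).
  assert (S' = S). { apply (uniqueness_sum A); auto. apply (isum_ext A'); auto. }
  exists B; split; auto. replace S with T by lra. auto.
Qed.

Lemma dist_avg p h c : is_dist p -> (forall x, 0 <= h x <= c) ->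
  infinite_sum (fun x => p x * h x) (ssum (fun x => p x * h x)) /\
  0 <= ssum (fun x => p x * h x) <= c.
Proof.
  intros [Hp0 Hp1] Hh.
  destruct (isum_comp (fun x => p x * h x) (fun x => c * p x) (c * 1)) as [a [Ha Ha']].
  - intros x; pose proof (Hp0 x); pose proof (Hh x); split. apply Rmult_le_pos; lra.
    rewrite Rmult_comm. apply Rmult_le_compat_r; lra.
  - apply isum_scal; auto.
  - rewrite (ssum_eq _ a Ha). split; auto. lra.
Qed.

Definition inner (w : nat -> nat -> R) (h : nat -> nat -> R) x := ssum (fun y => w x y * h x y).
Definition E2 (p : nat -> R) (w : nat -> nat -> R) (h : nat -> nat -> R) :=
  ssum (fun x => p x * inner w h x).

Lemma inner_spec w h c x : is_dist (w x) -> (forall y, 0 <= h x y <= c) ->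
  infinite_sum (fun y => w x y * h x y) (inner w h x) /\ 0 <= inner w h x <= c.
Proof. intros; apply dist_avg; auto. Qed.

Lemma E2_spec p w h c : is_dist p -> (forall x, is_dist (w x)) -> (forall x y, 0 <= h x y <= c) ->
  infinite_sum (fun x => p x * inner w h x) (E2 p w h) /\ 0 <= E2 p w h <= c.
Proof.
  intros Hp Hw Hh. apply dist_avg; auto. intros x. apply (inner_spec w h c x); auto.
Qed.

Lemma E2_mono p w h1 h2 c : is_dist p -> (forall x, is_dist (w x)) ->
  (forall x y, 0 <= h1 x y <= c) -> (forall x y, 0 <= h2 x y <= c) ->
  (forall x y, w x y * h1 x y <= w x y * h2 x y) -> E2 p w h1 <= E2 p w h2.
Proof.
  intros Hp Hw H1 H2 H.
  apply (isum_le (fun x => p x * inner w h1 x) (fun x => p x * inner w h2 x)).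
  - intros x. apply Rmult_le_compat_l. apply Hp.
    apply (isum_le (fun y => w x y * h1 x y) (fun y => w x y * h2 x y)); auto;
      apply (inner_spec w _ c x); auto.
  - apply (E2_spec p w h1 c); auto.
  - apply (E2_spec p w h2 c); auto.
Qed.

Lemma E2_plus p w h1 h2 c1 c2 : is_dist p -> (forall x, is_dist (w x)) ->
  (forall x y, 0 <= h1 x y <= c1) -> (forall x y, 0 <= h2 x y <= c2) ->
  E2 p w (fun x y => h1 x y + h2 x y) = E2 p w h1 + E2 p w h2.
Proof.
  intros Hp Hw H1 H2.
  assert (H3 : forall x y, 0 <= h1 x y + h2 x y <= c1 + c2) by (intros x y; specialize (H1 x y); specialize (H2 x y); lra).
  apply (uniqueness_sum (fun x => p x * inner w (fun x y => h1 x y + h2 x y) x)).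
  apply (E2_spec p w _ (c1 + c2)); auto.
  apply (isum_ext (fun x => p x * inner w h1 x + p x * inner w h2 x)).
  - intros x. rewrite <- Rmult_plus_distr_l. f_equal.
    unfold inner at 3. symmetry. apply ssum_eq.
    apply (isum_ext (fun y => w x y * h1 x y + w x y * h2 x y)). intros; ring.
    apply isum_plus. apply (inner_spec w h1 c1 x); auto. apply (inner_spec w h2 c2 x); auto.
  - apply isum_plus. apply (E2_spec p w h1 c1); auto. apply (E2_spec p w h2 c2); auto.
Qed.

Definition outd (p : nat -> R) (w : nat -> nat -> R) y := ssum (fun x => p x * w x y).

Lemma outd_spec p w : is_dist p -> (forall x, is_dist (w x)) ->
  (forall y, infinite_sum (fun x => p x * w x y) (outd p w y)) /\ is_dist (outd p w).
Proof.
  intros Hp Hw.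
  destruct (fubini (fun x y => p x * w x y) (fun x => p x * 1) 1) as [B [HB HB1]].
  - intros; apply Rmult_le_pos; [apply Hp | apply Hw].
  - intros x; apply isum_scal; apply Hw.
  - apply (isum_ext p). intros; ring. apply Hp.
  - assert (E : forall y, outd p w y = B y) by (intros; apply ssum_eq; auto).
    split. intros y; rewrite E; auto.
    split. intros y; rewrite E. apply (isum_nonneg (fun x => p x * w x y)); auto.
    intros; apply Rmult_le_pos; [apply Hp | apply Hw].
    apply (isum_ext B); auto.
Qed.

Lemma E2_swap p w k c : is_dist p -> (forall x, is_dist (w x)) -> (forall y, 0 <= k y <= c) ->
  E2 p w (fun _ y => k y) = ssum (fun y => outd p w y * k y).
Proof.
  intros Hp Hw Hk.
  destruct (outd_spec p w Hp Hw) as [Ho Hod].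
  destruct (fubini (fun x y => p x * (w x y * k y)) (fun x => p x * inner w (fun _ y => k y) x)
              (E2 p w (fun _ y => k y))) as [B [HB HB1]].
  - intros; apply Rmult_le_pos; [apply Hp|]. apply Rmult_le_pos; [apply Hw|apply Hk].
  - intros x; apply isum_scal. apply (inner_spec w (fun _ y => k y) c x); auto.
  - apply (E2_spec p w _ c); auto.
  - symmetry; apply ssum_eq. apply (isum_ext B); auto.
    intros y. apply (uniqueness_sum (fun x => p x * (w x y * k y))); auto.
    apply (isum_ext (fun x => k y * (p x * w x y))). intros; ring.
    rewrite Rmult_comm. apply isum_scal; auto.
Qed.

Lemma ln_le' x y : 0 < x -> x <= y -> ln x <= ln y.
Proof. intros Hx Hxy. destruct (Req_dec x y). subst; lra. left; apply ln_increasing; lra. Qed.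

Lemma ln_divR a b : 0 < a -> 0 < b -> ln (a / b) = ln a - ln b.
Proof. intros. unfold Rdiv. rewrite ln_mult, ln_Rinv; try lra. apply Rinv_0_lt_compat; auto. Qed.

Lemma ind_bounds beta R1 R2 n a b : 0 <= ind_below beta R1 R2 n a b <= 1.
Proof. unfold ind_below. destruct (Rlt_dec 0 b); [destruct Rlt_dec|]; lra. Qed.

Lemma spos n beta : 0 < Rpower (INR n) beta.
Proof. unfold Rpower. apply exp_pos. Qed.

Lemma ind_one beta R1 R2 n a b : ind_below beta R1 R2 n a b <> 0 ->
  0 < b /\ (ln (a / b) - INR n * R1) / Rpower (INR n) beta < R2 /\ ind_below beta R1 R2 n a b = 1.
Proof. unfold ind_below. destruct (Rlt_dec 0 b); [destruct Rlt_dec|]; intros; try lra; auto. Qed.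

Lemma ind_set beta R1 R2 n a b : 0 < b -> (ln (a / b) - INR n * R1) / Rpower (INR n) beta < R2 ->
  ind_below beta R1 R2 n a b = 1.
Proof. unfold ind_below. destruct (Rlt_dec 0 b); [destruct Rlt_dec|]; intros; try lra. Qed.

Lemma ind_mono beta R1 R2 R2' n a b : R2 <= R2' ->
  ind_below beta R1 R2 n a b <= ind_below beta R1 R2' n a b.
Proof. unfold ind_below. destruct (Rlt_dec 0 b); [do 2 destruct Rlt_dec|]; lra. Qed.

Lemma pb_bounds beta R1 R2 W P V n : is_channel W -> is_dist (P n) ->
  0 <= prob_below beta R1 R2 W P V n <= 1.
Proof.
  intros HW HP. apply (E2_spec (P n) (W n) (fun x y => ind_below beta R1 R2 n (W n x y) (V n y)) 1); auto.
  intros; apply ind_bounds.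
Qed.

Lemma pb_mono beta R1 R2 R2' W P V n : is_channel W -> is_dist (P n) -> R2 <= R2' ->
  prob_below beta R1 R2 W P V n <= prob_below beta R1 R2' W P V n.
Proof.
  intros HW HP H. apply (E2_mono (P n) (W n) _ _ 1); auto; try (intros; apply ind_bounds).
  intros; apply Rmult_le_compat_l. apply HW. apply ind_mono; auto.
Qed.

Lemma JI_bound beta R1 t gm W P Q n : is_channel W -> is_dist (P n) -> is_dist (Q n) -> 0 < gm ->
  prob_below beta R1 t W P Q n <=
  prob_below beta R1 (t + gm) W P (outdist W P) n + exp (- (Rpower (INR n) beta * gm)).
Proof.
  intros HW HP HQ Hg.
  set (s := Rpower (INR n) beta). assert (Hs : 0 < s) by apply spos.
  set (e := exp (- (s * gm))). assert (He : 0 < e) by apply exp_pos.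
  set (V := outdist W P n).
  set (k := fun y => if Rlt_dec (V y) (e * Q n y) then 1 else 0).
  assert (Hk : forall y, 0 <= k y <= 1) by (intros; unfold k; destruct Rlt_dec; lra).
  unfold prob_below.
  change (E2 (P n) (W n) (fun x y => ind_below beta R1 t n (W n x y) (Q n y)) <=
          E2 (P n) (W n) (fun x y => ind_below beta R1 (t + gm) n (W n x y) (V y)) + e).
  eapply Rle_trans.
  apply (E2_mono (P n) (W n) _ (fun x y => ind_below beta R1 (t + gm) n (W n x y) (V y) + k y) 2); auto.
  - intros; pose proof (ind_bounds beta R1 t n (W n x y) (Q n y)); lra.
  - intros; pose proof (ind_bounds beta R1 (t+gm) n (W n x y) (V y)); pose proof (Hk y); lra.
  - intros x y. apply Rmult_le_compat_l. apply HW.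
    destruct (Req_dec (ind_below beta R1 t n (W n x y) (Q n y)) 0) as [E0|E0].
    { rewrite E0. pose proof (ind_bounds beta R1 (t+gm) n (W n x y) (V y)); pose proof (Hk y); lra. }
    destruct (ind_one _ _ _ _ _ _ E0) as [HQy [Hlt ->]].
    unfold k. destruct (Rlt_dec (V y) (e * Q n y)) as [Hv|Hv].
    { pose proof (ind_bounds beta R1 (t+gm) n (W n x y) (V y)); lra. }
    destruct (Req_dec (W n x y) 0) as [Hw0|Hw0].
    {
      assert (0 < V y) by (pose proof (Rmult_lt_0_compat e (Q n y) He HQy); lra).
      rewrite (ind_set beta R1 (t + gm) n); try lra.
      rewrite Hw0 in *. unfold Rdiv in *. rewrite Rmult_0_l in *.
      apply (Rmult_lt_reg_r s); auto. unfold Rdiv in Hlt.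
      rewrite Rmult_assoc, Rinv_l by lra. rewrite Rmult_1_r.
      assert (((ln 0 - INR n * R1) * / s) * s < t * s) by (apply Rmult_lt_compat_r; auto).
      rewrite Rmult_assoc, Rinv_l in H0 by lra. nra. }
    assert (HWp : 0 < W n x y) by (pose proof (proj1 (HW n x) y); lra).
    assert (HVp : 0 < V y) by (pose proof (Rmult_lt_0_compat e (Q n y) He HQy); lra).
    rewrite (ind_set beta R1 (t + gm) n); try lra.
    rewrite ln_divR in * by auto.
    assert (ln (e * Q n y) <= ln (V y)) by (apply ln_le'; [apply Rmult_lt_0_compat|]; lra).
    rewrite ln_mult in H by lra. unfold e in H. rewrite ln_exp in H.
    assert (Hlt' : ln (W n x y) - ln (Q n y) - INR n * R1 < t * s).
    { unfold Rdiv in Hlt. apply (Rmult_lt_reg_r (/ s)). apply Rinv_0_lt_compat; auto.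
      rewrite Rmult_assoc, Rinv_r, Rmult_1_r by lra. auto. }
    unfold Rdiv. apply (Rmult_lt_reg_r s); auto.
    rewrite Rmult_assoc, Rinv_l, Rmult_1_r by lra. nra.
  - rewrite (E2_plus (P n) (W n) _ (fun _ y => k y) 1 1); auto; try (intros; apply ind_bounds).
    apply Rplus_le_compat_l.
    rewrite (E2_swap (P n) (W n) k 1); auto.
    destruct (outd_spec (P n) (W n) HP (HW n)) as [_ [Ho0 Ho1]].
    destruct (dist_avg (outd (P n) (W n)) k 1 (conj Ho0 Ho1) Hk) as [Hs1 _].
    replace e with (e * 1) by ring.
    apply (isum_le (fun y => outd (P n) (W n) y * k y) (fun y => e * Q n y)); auto.
    + intros y. unfold k. fold V. change (outd (P n) (W n) y) with (V y).
      destruct Rlt_dec; [lra|]. rewrite Rmult_0_r. apply Rmult_le_pos; [lra| apply HQ].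
    + apply isum_scal; apply HQ.
Qed.

Lemma dist_le1 p y : is_dist p -> p y <= 1.
Proof.
  intros [H0 H1]. eapply Rle_trans; [|apply (isum_partial p 1 y); auto].
  destruct y; simpl; [lra|]. pose proof (cond_pos_sum p y H0); lra.
Qed.

Lemma isum_point a v : infinite_sum (fun x => if Nat.eq_dec a x then v else 0) v.
Proof.
  assert (E : fsum (S a) (fun x => if Nat.eq_dec a x then v else 0) = v).
  { simpl. rewrite (fsum_ext a _ (fun _ => 0)). rewrite fsum_const.
    destruct Nat.eq_dec; [|lia]. ring.
    intros i Hi; destruct Nat.eq_dec; [lia|auto]. }
  pose proof (isum_finite (fun x => if Nat.eq_dec a x then v else 0) (S a)) as Hf.
  rewrite E in Hf. apply Hf. intros x Hx; destruct Nat.eq_dec; [lia|auto].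
Qed.

Definition emp (F : code) (x : nat) : R :=
  / INR (cN F) * fsum (cN F) (fun i => if Nat.eq_dec (cphi F i) x then 1 else 0).

Lemma emp_avg F h : infinite_sum (fun x => emp F x * h x) (/ INR (cN F) * fsum (cN F) (fun i => h (cphi F i))).
Proof.
  apply (isum_ext (fun x => / INR (cN F) * fsum (cN F) (fun i => if Nat.eq_dec (cphi F i) x then h x else 0))).
  - intros x. unfold emp. rewrite Rmult_assoc. f_equal. rewrite Rmult_comm, <- fsum_scal.
    apply fsum_ext; intros; destruct Nat.eq_dec; ring.
  - apply isum_scal. apply isum_fsum. intros i Hi.
    apply (isum_ext (fun x => if Nat.eq_dec (cphi F i) x then h (cphi F i) else 0)).
    intros x; destruct Nat.eq_dec; subst; auto. apply isum_point.
Qed.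

Lemma emp_dist F : (0 < cN F)%nat -> is_dist (emp F).
Proof.
  intros HN. assert (HNp : 0 < INR (cN F)) by (apply lt_0_INR; lia).
  split.
  - intros y. unfold emp. apply Rmult_le_pos. left; apply Rinv_0_lt_compat; auto.
    apply fsum_nonneg; intros; destruct Nat.eq_dec; lra.
  - apply (isum_ext (fun x => emp F x * 1)). intros; ring.
    pose proof (emp_avg F (fun _ => 1)) as Hf. simpl in Hf. rewrite fsum_const in Hf.
    replace (/ INR (cN F) * (INR (cN F) * 1)) with 1 in Hf by (field; lra). exact Hf.
Qed.

Lemma emp_supp F x : emp F x <> 0 -> exists i, (i < cN F)%nat /\ cphi F i = x.
Proof.
  intros H. apply NNPP; intro C. apply H. unfold emp.
  rewrite (fsum_ext _ _ (fun _ => 0)). rewrite fsum_const; ring.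
  intros i Hi; destruct Nat.eq_dec; auto. exfalso; apply C; eauto.
Qed.

Lemma emp_Pc c K n F : valid_code c K n F -> is_dist (emp F) /\ (forall x, emp F x <> 0 -> in_cost c K n x).
Proof.
  intros [HN [_ Hc]]. split. apply emp_dist; auto.
  intros x Hx. destruct (emp_supp F x Hx) as [i [Hi <-]]. auto.
Qed.

Lemma fsum_disj N (D : nat -> bool) v : 0 <= v ->
  (forall i j, (i < N)%nat -> (j < N)%nat -> i <> j -> D i = true -> D j = false) ->
  fsum N (fun i => if D i then v else 0) <= v.
Proof.
  intros Hv. induction N; intros H; simpl; try lra.
  destruct (D N) eqn:E.
  - rewrite (fsum_ext _ _ (fun _ => 0)). rewrite fsum_const; lra.
    intros i Hi. rewrite (H N i); auto; lia.
  - rewrite Rplus_0_r. apply IHN. intros; apply (H i j); auto; lia.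
Qed.

Lemma converse beta R1 t W P c K n F : is_channel W -> valid_code c K n F -> P n = emp F ->
  prob_below beta R1 t W P (outdist W P) n <=
  Perr W n F + exp (- (Rpower (INR n) beta * (rate2 beta R1 n F - t))).
Proof.
  intros HW HF HPn. pose proof HF as [HN [Hdisj _]].
  set (N := cN F) in *. assert (HNp : 0 < INR N) by (apply lt_0_INR; lia).
  set (s := Rpower (INR n) beta). assert (Hs : 0 < s) by apply spos.
  set (th := exp (INR n * R1 + s * t)). assert (Hth : 0 < th) by apply exp_pos.
  assert (HPd : is_dist (P n)) by (rewrite HPn; apply emp_dist; auto).
  set (V := outdist W P n).
  assert (HV : is_dist V) by (apply (outd_spec (P n) (W n)); auto).
  set (h := fun x y => ind_below beta R1 t n (W n x y) (V y)).
  set (A := fun i => ssum (fun y => if cD F i y then V y else 0)).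
  set (B := fun i => ssum (fun y => if cD F i y then W n (cphi F i) y else 0)).
  assert (HA : forall i, infinite_sum (fun y => if cD F i y then V y else 0) (A i)).
  { intros i. apply (isum_ext (fun y => V y * (if cD F i y then 1 else 0))).
    intros; destruct cD; ring. unfold A.
    rewrite (ssum_eq _ (ssum (fun y => V y * (if cD F i y then 1 else 0)))).
    apply (dist_avg V _ 1); auto. intros; destruct cD; lra.
    apply (isum_ext (fun y => V y * (if cD F i y then 1 else 0))). intros; destruct cD; ring.
    apply (dist_avg V _ 1); auto. intros; destruct cD; lra. }
  assert (HB : forall i, infinite_sum (fun y => if cD F i y then W n (cphi F i) y else 0) (B i)).
  { intros i. unfold B.
    assert (Hx : infinite_sum (fun y => W n (cphi F i) y * (if cD F i y then 1 else 0))
                  (ssum (fun y => W n (cphi F i) y * (if cD F i y then 1 else 0)))).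
    { apply (dist_avg _ _ 1); auto. intros; destruct cD; lra. }
    assert (Hx' : infinite_sum (fun y => if cD F i y then W n (cphi F i) y else 0)
                  (ssum (fun y => W n (cphi F i) y * (if cD F i y then 1 else 0)))).
    { eapply isum_ext; [|exact Hx]. intros y; simpl; destruct (cD F i y); ring. }
    rewrite (ssum_eq _ _ Hx'). exact Hx'. }
  assert (Hpb : prob_below beta R1 t W P (outdist W P) n = / INR N * fsum N (fun i => inner (W n) h (cphi F i))).
  { unfold prob_below. apply ssum_eq. rewrite HPn. apply emp_avg. }
  assert (Hinner : forall i, (i < N)%nat -> inner (W n) h (cphi F i) <= th * A i + (1 - B i)).
  { intros i Hi.
    apply (isum_le (fun y => W n (cphi F i) y * h (cphi F i) y)
                   (fun y => th * (if cD F i y then V y else 0) +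
                             (W n (cphi F i) y + (-1) * (if cD F i y then W n (cphi F i) y else 0)))).
    - intros y. pose proof (proj1 (HW n (cphi F i)) y) as Hw0.
      pose proof (ind_bounds beta R1 t n (W n (cphi F i) y) (V y)) as Hb.
      fold (h (cphi F i) y) in Hb.
      destruct (cD F i y).
      + destruct (Req_dec (h (cphi F i) y) 0) as [E|E].
        { rewrite E. pose proof (proj1 HV y). nra. }
        destruct (ind_one _ _ _ _ _ _ E) as [HVp [Hlt E1]]. fold (h (cphi F i) y) in E1. rewrite E1.
        destruct (Req_dec (W n (cphi F i) y) 0) as [Ew|Ew]. { rewrite Ew. nra. }
        assert (Hwp : 0 < W n (cphi F i) y) by lra.
        rewrite ln_divR in Hlt by auto.
        assert (Hlt' : ln (W n (cphi F i) y) - ln (V y) < INR n * R1 + s * t).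
        { unfold Rdiv in Hlt. apply (Rmult_lt_compat_r s) in Hlt; auto.
          rewrite Rmult_assoc, Rinv_l, Rmult_1_r in Hlt by lra. fold s in Hlt. lra. }
        assert (W n (cphi F i) y < th * V y).
        { rewrite <- (exp_ln (W n (cphi F i) y)), <- (exp_ln (V y)) by auto.
          unfold th. rewrite <- exp_plus. apply exp_increasing. lra. }
        lra.
      + nra.
    - apply (inner_spec (W n) h 1); auto. intros; apply ind_bounds.
    - apply isum_plus. apply isum_scal; auto. apply isum_plus. apply HW. replace (- B i) with (-1 * B i) by ring. apply isum_scal; auto. }
  rewrite Hpb. unfold Perr. fold N.
  assert (HsumA : fsum N A <= 1).
  { apply (isum_le (fun y => fsum N (fun i => if cD F i y then V y else 0)) V).
    - intros y. apply fsum_disj. apply HV. intros i j Hi Hj Hij HD; exact (Hdisj i j y Hi Hj Hij HD).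
    - apply isum_fsum. auto.
    - apply HV. }
  assert (fsum N (fun i => inner (W n) h (cphi F i)) <= th * fsum N A + fsum N (fun i => 1 - B i)).
  { rewrite <- fsum_scal, <- fsum_plus. apply fsum_le; auto. }
  assert (Hexp : / INR N * th = exp (- (s * (rate2 beta R1 n F - t)))).
  { unfold rate2. fold N. fold s. unfold th.
    replace (- (s * ((ln (INR N) - INR n * R1) / s - t))) with (INR n * R1 + s * t - ln (INR N)) by (field; lra).
    unfold Rminus. rewrite (exp_plus (INR n * R1 + s * t) (- ln (INR N))), exp_Ropp, exp_ln by auto. ring. }
  fold s. rewrite <- Hexp.
  assert (0 <= fsum N A) by (apply fsum_nonneg; intros i Hi; refine (isum_nonneg _ _ _ (HA i)); intros y; destruct (cD F i y); [apply HV | lra]).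
  assert (0 < / INR N) by (apply Rinv_0_lt_compat; auto).
  change (fsum N (fun i => 1 - ssum (fun y => if cD F i y then W n (cphi F i) y else 0)))
    with (fsum N (fun i => 1 - B i)).
  assert (fsum N (fun i => inner (W n) h (cphi F i)) <= th + fsum N (fun i => 1 - B i)) by nra.
  apply (Rmult_le_compat_l (/ INR N)) in H2; [|lra]. lra.
Qed.

Definition b2r (b : bool) : R := if b then 1 else 0.
Lemma b2r_bounds b : 0 <= b2r b <= 1.
Proof. destruct b; simpl; lra. Qed.

Lemma ssum_ext f g : (forall x, f x = g x) -> ssum f = ssum g.
Proof. intros H. f_equal. extensionality x; auto. Qed.

Section Fein.
Variables (W : nat -> nat -> nat -> R) (n : nat) (p : nat -> R) (th : R) (N : nat).
Hypothesis HW : is_channel W.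
Hypothesis Hp : is_dist p.
Hypothesis Hth : 0 < th.
Hypothesis HN : (0 < N)%nat.

Definition Vf := outd p (W n).
Definition Gf (x y : nat) : bool := if Rlt_dec (th * Vf y) (W n x y) then true else false.
Fixpoint Uf (phi : nat -> nat) (i y : nat) : bool :=
  match i with O => false | S j => Uf phi j y || Gf (phi j) y end.
Definition Df (phi : nat -> nat) (i y : nat) : bool := Gf (phi i) y && negb (Uf phi i y).
Definition tau := E2 p (W n) (fun x y => b2r (negb (Gf x y))) + INR N / th.

Definition Good (phi : nat -> nat) m := forall i, (i < m)%nat ->
  p (phi i) <> 0 /\ 1 - tau < inner (W n) (fun _ y => b2r (Df phi i y)) (phi i).

Lemma Uf_ext phi phi' i y : (forall j, (j < i)%nat -> phi j = phi' j) -> Uf phi i y = Uf phi' i y.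
Proof. induction i; simpl; intros H; auto. rewrite (IHi ltac:(intros; apply H; lia)), (H i) by lia. auto. Qed.

Lemma Uf_G phi i j y : (i < j)%nat -> Gf (phi i) y = true -> Uf phi j y = true.
Proof.
  induction j; intros; [lia|]. simpl. destruct (Nat.eq_dec i j). subst; rewrite H0; apply Bool.orb_true_r.
  rewrite IHj; auto; lia.
Qed.

Lemma Uf_D phi m y : Uf phi m y = true -> exists j, (j < m)%nat /\ Df phi j y = true.
Proof.
  induction m; simpl; intros H; [discriminate|].
  destruct (Uf phi m y) eqn:E.
  - destruct (IHm eq_refl) as [j [Hj Hd]]; exists j; split; auto.
  - exists m; split; auto. unfold Df. rewrite E. simpl in H. rewrite H. auto.
Qed.

Lemma Vf_dist : is_dist Vf.
Proof. apply (outd_spec p (W n)); auto. Qed.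

Lemma E2_one : E2 p (W n) (fun _ _ => 1) = 1.
Proof.
  apply ssum_eq. apply (isum_ext p). intros x. unfold inner.
  rewrite (ssum_eq _ 1). ring. apply (isum_ext (W n x)). intros; ring. apply HW. apply Hp.
Qed.

Lemma D_mass phi j : ssum (fun y => Vf y * b2r (Df phi j y)) <= / th.
Proof.
  assert (HVd := Vf_dist).
  destruct (dist_avg Vf (fun y => b2r (Df phi j y)) 1 HVd (fun y => b2r_bounds _)) as [H1 _].
  destruct (dist_avg (W n (phi j)) (fun y => b2r (Df phi j y)) 1 (HW n _) (fun y => b2r_bounds _)) as [H2 [_ H3]].
  assert (ssum (fun y => Vf y * b2r (Df phi j y)) <= / th * ssum (fun y => W n (phi j) y * b2r (Df phi j y))).
  { refine (isum_le _ (fun y => / th * (W n (phi j) y * b2r (Df phi j y))) _ _ _ H1 _). 2: apply isum_scal; auto.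
    intros y. unfold Df, Gf. destruct Rlt_dec; destruct (Uf phi j y); simpl; try (rewrite !Rmult_0_r; lra).
    rewrite !Rmult_1_r. apply (Rmult_le_reg_l th); auto. rewrite <- Rmult_assoc, Rinv_r, Rmult_1_l; lra. }
  assert (0 < / th) by (apply Rinv_0_lt_compat; auto). nra.
Qed.

Lemma good_step phi m : (m < N)%nat -> Good phi m -> exists phi', Good phi' (S m).
Proof.
  intros Hm Hg.
  destruct (classic (exists x, p x <> 0 /\
     1 - tau < inner (W n) (fun x y => b2r (Gf x y && negb (Uf phi m y))) x)) as [[x [Hx1 Hx2]]|Hno].
  - exists (fun k => if Nat.eq_dec k m then x else phi k).
    assert (HU : forall i y, (i <= m)%nat -> Uf (fun k => if Nat.eq_dec k m then x else phi k) i y = Uf phi i y).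
    { intros i y Hi. apply Uf_ext. intros j Hj. destruct Nat.eq_dec; [lia|auto]. }
    intros i Hi. destruct (Nat.eq_dec i m) as [->|Hne].
    + destruct (Nat.eq_dec m m); [|lia]. split; auto.
      unfold inner in *. erewrite ssum_ext; [exact Hx2|]. intros y. simpl.
      unfold Df. rewrite HU by lia. destruct Nat.eq_dec; [|lia]. auto.
    + destruct (Nat.eq_dec i m); [lia|]. destruct (Hg i ltac:(lia)) as [Hg1 Hg2]. split; auto.
      unfold inner in *. erewrite ssum_ext; [exact Hg2|]. intros y. simpl.
      unfold Df. rewrite HU by lia. destruct Nat.eq_dec; [lia|]. auto.
  - exfalso.
    assert (Hall : forall x, p x <> 0 ->
      inner (W n) (fun x y => b2r (Gf x y && negb (Uf phi m y))) x <= 1 - tau).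
    { intros x Hx. apply Rnot_lt_le. intro C; apply Hno; eauto. }
    set (g := fun x y => b2r (Gf x y)).
    set (ng := fun x y => b2r (negb (Gf x y))).
    set (ga := fun x y => b2r (Gf x y && negb (Uf phi m y))).
    set (u := fun y => b2r (Uf phi m y)).
    assert (Hsum1 : E2 p (W n) g + E2 p (W n) ng = 1).
    { rewrite <- (E2_plus p (W n) g ng 1 1); auto; try (intros; apply b2r_bounds).
      rewrite <- E2_one. f_equal. extensionality x; extensionality y. unfold g, ng; destruct Gf; simpl; ring. }
    assert (Hg1 : E2 p (W n) g <= E2 p (W n) ga + E2 p (W n) (fun _ y => u y)).
    { rewrite <- (E2_plus p (W n) ga (fun _ y => u y) 1 1); auto; try (intros; apply b2r_bounds).
      apply (E2_mono p (W n) _ _ 2); auto; try (intros; pose proof (b2r_bounds (Gf x y)); pose proof (b2r_bounds (Gf x y && negb (Uf phi m y))); pose proof (b2r_bounds (Uf phi m y)); unfold g, ga, u; lra).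
      intros x y. apply Rmult_le_compat_l. apply HW. unfold g, ga, u.
      destruct (Gf x y), (Uf phi m y); simpl; lra. }
    assert (Hga : E2 p (W n) ga <= 1 - tau).
    { destruct (E2_spec p (W n) ga 1) as [H1 _]; auto. intros; apply b2r_bounds.
      refine (isum_le _ (fun x => p x * (1 - tau)) _ _ _ H1 _).
      intros x. destruct (Req_dec (p x) 0) as [E|E]. rewrite E; lra.
      apply Rmult_le_compat_l. apply Hp. apply Hall; auto.
      pose proof (isum_scal p 1 (1 - tau) (proj2 Hp)) as Hs. rewrite Rmult_1_r in Hs.
      eapply isum_ext; [|exact Hs]. intros; simpl; ring. }
    assert (Hu : E2 p (W n) (fun _ y => u y) <= INR m / th).
    { rewrite (E2_swap p (W n) u 1); auto; [|intros; apply b2r_bounds].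
      change (outd p (W n)) with Vf.
      assert (HVd := Vf_dist).
      destruct (dist_avg Vf u 1 HVd (fun y => b2r_bounds _)) as [H1 _].
      apply Rle_trans with (fsum m (fun j => ssum (fun y => Vf y * b2r (Df phi j y)))).
      2:{ apply Rle_trans with (fsum m (fun _ => / th)).
        apply fsum_le; intros; apply D_mass. rewrite fsum_const. unfold Rdiv; lra. }
      refine (isum_le _ (fun y => fsum m (fun j => Vf y * b2r (Df phi j y))) _ _ _ H1 _).
      - intros y. unfold u. destruct (Uf phi m y) eqn:E.
        + destruct (Uf_D phi m y E) as [j [Hj Hd]].
          simpl b2r at 1. rewrite Rmult_1_r.
          assert (fsum m (fun j => Vf y * b2r (Df phi j y)) >= Vf y * b2r (Df phi j y)).
          { clear -Hj HVd. induction m; [lia|]. simpl.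
            assert (0 <= Vf y * b2r (Df phi m y)) by (apply Rmult_le_pos; [apply HVd|apply b2r_bounds]).
            destruct (Nat.eq_dec j m). subst.
            assert (0 <= fsum m (fun j => Vf y * b2r (Df phi j y))) by (apply fsum_nonneg; intros; apply Rmult_le_pos; [apply HVd|apply b2r_bounds]). lra.
            specialize (IHm ltac:(lia)). lra. }
          rewrite Hd in H. simpl in H. lra.
        + simpl. rewrite Rmult_0_r. apply fsum_nonneg; intros; apply Rmult_le_pos; [apply HVd|apply b2r_bounds].
      - apply isum_fsum. intros i _. apply (dist_avg Vf (fun y => b2r (Df phi i y)) 1 HVd (fun y => b2r_bounds _)). }
    unfold tau in Hga. fold ng in Hga.
    assert (INR m < INR N) by (apply lt_INR; auto).
    assert (INR m / th < INR N / th) by (unfold Rdiv; apply Rmult_lt_compat_r; auto; apply Rinv_0_lt_compat; auto).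
    lra.
Qed.

Lemma good_all : forall m, (m <= N)%nat -> exists phi, Good phi m.
Proof.
  induction m; intros Hm. exists (fun _ => 0%nat); intros i Hi; lia.
  destruct (IHm ltac:(lia)) as [phi Hphi]. apply (good_step phi m); auto.
Qed.

End Fein.

Lemma feinstein W n P c K th N : is_channel W -> is_dist (P n) ->
  (forall x, P n x <> 0 -> in_cost c K n x) -> 0 < th -> (0 < N)%nat ->
  exists F, valid_code c K n F /\ cN F = N /\
    Perr W n F <= E2 (P n) (W n) (fun x y => b2r (negb (Gf W n (P n) th x y))) + INR N / th.
Proof.
  intros HW Hp Hc Hth HN.
  destruct (good_all W n (P n) th N HW Hp Hth HN N (le_n N)) as [phi Hphi].
  exists (Code N phi (Df W n (P n) th phi)). split; [|split; auto].
  - split; [simpl; auto|split].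
    + simpl. intros i j y Hi Hj Hij Hd.
      pose proof Hd as Hd0. unfold Df in Hd0. apply andb_prop in Hd0 as [Hd1 Hd2].
      destruct (Nat.lt_trichotomy i j) as [Hlt|[Heq|Hgt]]; try lia.
      * unfold Df. rewrite (Uf_G W n (P n) th N HN phi i j y) by auto. apply Bool.andb_false_r.
      *
        unfold Df. destruct (Gf W n (P n) th (phi j) y) eqn:Ej; simpl; auto.
        assert (HU : Uf W n (P n) th phi i y = true) by (apply (Uf_G W n (P n) th N HN phi j i y); auto).
        rewrite HU in Hd2. discriminate.
    + simpl. intros i Hi. apply Hc. apply (Hphi i Hi).
  - unfold Perr. simpl.
    set (T := tau W n (P n) th N). fold T.
    assert (HNp : 0 < INR N) by (apply lt_0_INR; auto).
    assert (fsum N (fun i => 1 - ssum (fun y => if Df W n (P n) th phi i y then W n (phi i) y else 0)) <= fsum N (fun _ => T)).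
    { apply fsum_le. intros i Hi. destruct (Hphi i Hi) as [_ H2]. unfold inner in H2.
      rewrite (ssum_ext _ (fun y => W n (phi i) y * b2r (Df W n (P n) th phi i y))). fold T in H2. lra.
      intros y; unfold b2r; destruct Df; ring. }
    rewrite fsum_const in H. apply (Rmult_le_compat_l (/ INR N)) in H.
    replace (/ INR N * (INR N * T)) with T in H by (field; lra). auto.
    left; apply Rinv_0_lt_compat; auto.
Qed.

Lemma nat_floor x : 1 <= x -> exists N : nat, (1 <= N)%nat /\ INR N <= x < INR N + 1.
Proof.
  intros Hx. destruct (archimed x) as [H1 H2].
  assert (Hz : (1 < up x)%Z) by (apply lt_IZR; simpl; lra).
  exists (Z.to_nat (up x - 1)).
  assert (E : INR (Z.to_nat (up x - 1)) = IZR (up x) - 1).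
  { rewrite INR_IZR_INZ, Z2Nat.id by lia. rewrite minus_IZR. simpl; ring. }
  rewrite E. split; [|lra]. lia.
Qed.

Lemma trivial_code c K n x0 : in_cost c K n x0 -> valid_code c K n (Code 1 (fun _ => x0) (fun _ _ => true)).
Proof.
  intros H. split; simpl; [lia|split].
  - intros i j y Hi Hj Hij. lia.
  - intros; auto.
Qed.

Lemma trivial_Perr W n x0 : is_channel W -> Perr W n (Code 1 (fun _ => x0) (fun _ _ => true)) = 0.
Proof.
  intros HW. unfold Perr; simpl. rewrite (ssum_eq _ 1). field.
  apply (isum_ext (W n x0)). auto. apply HW.
Qed.

Lemma achieve beta R1 W P c K n r d : is_channel W -> is_dist (P n) ->
  (forall x, P n x <> 0 -> in_cost c K n x) -> (exists x, in_cost c K n x) -> 0 < d ->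
  exists F, valid_code c K n F /\
    r - ln 2 / Rpower (INR n) beta <= rate2 beta R1 n F /\
    Perr W n F <= prob_below beta R1 (r + 2 * d) W P (outdist W P) n + exp (- (Rpower (INR n) beta * d)).
Proof.
  intros HW HP Hc [x0 Hx0] Hd.
  set (s := Rpower (INR n) beta). assert (Hs : 0 < s) by apply spos.
  assert (Hl2 : 0 < ln 2) by (pose proof ln_lt_2; lra).
  assert (Hpb0 : 0 <= prob_below beta R1 (r + 2 * d) W P (outdist W P) n) by (apply pb_bounds; auto).
  assert (He0 : 0 < exp (- (s * d))) by apply exp_pos.
  set (X := exp (INR n * R1 + s * r)).
  destruct (Rlt_dec X 1) as [HX|HX].
  - exists (Code 1 (fun _ => x0) (fun _ _ => true)). split; [apply trivial_code; auto|split].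
    + unfold rate2; simpl. rewrite ln_1. fold s.
      assert (INR n * R1 + s * r < 0).
      { unfold X in HX. rewrite <- exp_0 in HX. apply exp_lt_inv in HX. auto. }
      assert (r <= (0 - INR n * R1) / s).
      { apply (Rmult_le_reg_r s); auto. unfold Rdiv. rewrite Rmult_assoc, Rinv_l, Rmult_1_r by lra. lra. }
      assert (0 < ln 2 / s) by (apply Rdiv_lt_0_compat; auto). lra.
    + rewrite trivial_Perr; auto. fold s. lra.
  - destruct (nat_floor X ltac:(lra)) as [N [HN [HN1 HN2]]].
    assert (HNp : 0 < INR N) by (apply lt_0_INR; lia).
    set (th := exp (INR n * R1 + s * (r + d))). assert (Hth : 0 < th) by apply exp_pos.
    destruct (feinstein W n P c K th N HW HP Hc Hth ltac:(lia)) as [F [HF [HFN HFP]]].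
    exists F. split; auto. split.
    + unfold rate2. rewrite HFN. fold s.
      assert (1 <= INR N) by (apply (le_INR 1); lia). assert (X / 2 <= INR N) by lra.
      assert (Hln : ln (X / 2) <= ln (INR N)) by (apply ln_le'; auto; unfold X; pose proof (exp_pos (INR n * R1 + s * r)); lra).
      rewrite ln_divR in Hln by (try lra; apply exp_pos). unfold X in Hln. rewrite ln_exp in Hln.
      apply (Rmult_le_reg_r s); auto. unfold Rdiv. rewrite Rmult_minus_distr_r, !Rmult_assoc, !Rinv_l, !Rmult_1_r by lra. lra.
    + eapply Rle_trans; [exact HFP|]. apply Rplus_le_compat.
      * unfold prob_below.
        apply (E2_mono (P n) (W n) _ _ 1); auto; try (intros; apply b2r_bounds); try (intros; apply ind_bounds).
        intros x y. destruct (Req_dec (W n x y) 0) as [E|E]. { rewrite E; lra. } apply Rmult_le_compat_l. apply HW.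
        unfold b2r, Gf. destruct Rlt_dec as [Hlt|Hnlt]; simpl; [pose proof (ind_bounds beta R1 (r + 2*d) n (W n x y) (outdist W P n y)); lra|].

        cut (ind_below beta R1 (r + 2 * d) n (W n x y) (outdist W P n y) = 1). intros ->; lra.
        assert (HWp : 0 < W n x y) by (pose proof (proj1 (HW n x) y); lra).
        assert (Hn2 : W n x y <= th * outdist W P n y) by (apply Rnot_lt_le; exact Hnlt).
        assert (HVp : 0 < outdist W P n y).
        { assert (0 < th * outdist W P n y) by lra.
          apply (Rmult_lt_reg_l th); auto. lra. }
        apply ind_set; auto. rewrite ln_divR by auto.
        assert (ln (W n x y) <= ln (th * outdist W P n y)) by (apply ln_le'; auto; lra).
        rewrite ln_mult in H by auto. unfold th in H; rewrite ln_exp in H.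
        apply (Rmult_lt_reg_r s); auto. unfold Rdiv. rewrite Rmult_assoc, Rinv_l, Rmult_1_r by lra.
        fold s. nra.
      * fold s. unfold Rdiv. apply Rle_trans with (X * / th).
        apply Rmult_le_compat_r; [left; apply Rinv_0_lt_compat|]; auto.
        unfold X, th. rewrite <- exp_Ropp, <- exp_plus. right; f_equal; ring.
Qed.

Lemma s_inf beta : 0 < beta -> forall M, exists N0, forall n, (N0 <= n)%nat -> M <= Rpower (INR n) beta.
Proof.
  intros Hb M.
  destruct (nat_floor (exp (Rabs M / beta) + 1)) as [N0 [HN0 [H1 H2]]].
  pose proof (exp_pos (Rabs M / beta)); lra.
  exists (S N0). intros n Hn.
  assert (INR (S N0) <= INR n) by (apply le_INR; auto). rewrite S_INR in H.
  assert (Hexp : exp (Rabs M / beta) < INR n) by lra.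
  assert (Hn0 : 0 < INR n) by (pose proof (exp_pos (Rabs M / beta)); lra).
  assert (Rabs M / beta < ln (INR n)).
  { rewrite <- (ln_exp (Rabs M / beta)). apply ln_increasing; auto. apply exp_pos. }
  unfold Rpower. eapply Rle_trans; [|apply exp_ineq1_le].
  assert (Rabs M < beta * ln (INR n)).
  { apply (Rmult_lt_compat_l beta) in H0; auto. unfold Rdiv in H0.
    rewrite <- Rmult_assoc, (Rmult_comm beta (Rabs M)), Rmult_assoc, Rinv_r, Rmult_1_r in H0 by lra. lra. }
  pose proof (Rle_abs M). lra.
Qed.

Lemma exp_le_exp x y : x <= y -> exp x <= exp y.
Proof. intros H. destruct (Req_dec x y). subst; lra. left; apply exp_increasing; lra. Qed.

Lemma exp_small beta c e : 0 < beta -> 0 < c -> 0 < e ->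
  exists N0, forall n, (N0 <= n)%nat -> exp (- (Rpower (INR n) beta * c)) <= e.
Proof.
  intros Hb Hc He. destruct (s_inf beta Hb ((- ln e) / c)) as [N0 HN0]. exists N0. intros n Hn.
  specialize (HN0 n Hn). rewrite <- (exp_ln e) by auto. apply exp_le_exp.
  apply (Rmult_le_compat_r c) in HN0; [|lra]. unfold Rdiv in HN0.
  rewrite Rmult_assoc, Rinv_l, Rmult_1_r in HN0 by lra. lra.
Qed.

Lemma ln2_small beta e : 0 < beta -> 0 < e ->
  exists N0, forall n, (N0 <= n)%nat -> ln 2 / Rpower (INR n) beta <= e.
Proof.
  intros Hb He. destruct (s_inf beta Hb (ln 2 / e)) as [N0 HN0]. exists N0. intros n Hn.
  specialize (HN0 n Hn). pose proof (spos n beta).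
  assert (0 < ln 2) by (pose proof ln_lt_2; lra).
  apply (Rmult_le_reg_r (Rpower (INR n) beta)); auto. unfold Rdiv.
  rewrite Rmult_assoc, Rinv_l, Rmult_1_r by lra.
  apply (Rmult_le_compat_l e) in HN0; [|lra]. unfold Rdiv in HN0.
  rewrite (Rmult_comm (ln 2)), <- Rmult_assoc, Rinv_r, Rmult_1_l in HN0 by lra. lra.
Qed.

Lemma ev_and (A B : nat -> Prop) : (exists N, forall n, (N <= n)%nat -> A n) ->
  (exists N, forall n, (N <= n)%nat -> B n) -> exists N, forall n, (N <= n)%nat -> A n /\ B n.
Proof. intros [N1 H1] [N2 H2]. exists (max N1 N2). intros; split; [apply H1|apply H2]; lia. Qed.

Lemma Perr_bounds W c K n F : is_channel W -> valid_code c K n F -> 0 <= Perr W n F <= 1.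
Proof.
  intros HW [HN _]. unfold Perr.
  assert (HNp : 0 < INR (cN F)) by (apply lt_0_INR; lia).
  assert (Hb : forall i, 0 <= 1 - ssum (fun y => if cD F i y then W n (cphi F i) y else 0) <= 1).
  { intros i. destruct (dist_avg (W n (cphi F i)) (fun y => b2r (cD F i y)) 1 (HW n _) (fun y => b2r_bounds _)) as [_ Hb].
    rewrite (ssum_ext _ (fun y => W n (cphi F i) y * b2r (cD F i y))). lra.
    intros y; unfold b2r; destruct cD; ring. }
  pose proof (fsum_le (cN F) _ _ (fun i _ => proj2 (Hb i))). pose proof (fsum_le (cN F) (fun _ => 0) _ (fun i _ => proj1 (Hb i))).
  rewrite fsum_const in *. assert (0 < / INR (cN F)) by (apply Rinv_0_lt_compat; auto).
  split. nra. apply (Rmult_le_compat_l (/ INR (cN F))) in H; [|lra].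
  replace (/ INR (cN F) * (INR (cN F) * 1)) with 1 in H by (field; lra). lra.
Qed.

Lemma Ip_bounds beta t R1 P W : is_channel W -> (forall n, is_dist (P n)) ->
  (forall n, 0 <= prob_below beta R1 t W P (outdist W P) n <= 1).
Proof. intros; apply pb_bounds; auto. Qed.

Lemma Ip_mono beta t t' R1 P W : is_channel W -> (forall n, is_dist (P n)) -> t <= t' ->
  Ip beta t R1 P W <= Ip beta t' R1 P W.
Proof.
  intros HW HP Ht. unfold Ip. fold (lsR (prob_below beta R1 t W P (outdist W P))).
  fold (lsR (prob_below beta R1 t' W P (outdist W P))).
  apply (lsR_le _ 0 1). intros; apply pb_bounds; auto.
  intros g Hg. destruct (lsR_ev (prob_below beta R1 t' W P (outdist W P)) 0 1 (fun n => pb_bounds _ _ _ _ _ _ _ HW (HP n)) g Hg) as [N HN].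
  exists N; intros n Hn. specialize (HN n Hn). pose proof (pb_mono beta R1 t t' W P (outdist W P) n HW (HP n) Ht). lra.
Qed.

Lemma Jp_mono beta t t' R1 P Q W : is_channel W -> (forall n, is_dist (P n)) -> t <= t' ->
  Jp beta t R1 P Q W <= Jp beta t' R1 P Q W.
Proof.
  intros HW HP Ht. unfold Jp. fold (lsR (prob_below beta R1 t W P Q)).
  fold (lsR (prob_below beta R1 t' W P Q)).
  apply (lsR_le _ 0 1). intros; apply pb_bounds; auto.
  intros g Hg. destruct (lsR_ev (prob_below beta R1 t' W P Q) 0 1 (fun n => pb_bounds _ _ _ _ _ _ _ HW (HP n)) g Hg) as [N HN].
  exists N; intros n Hn. specialize (HN n Hn). pose proof (pb_mono beta R1 t t' W P Q n HW (HP n) Ht). lra.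
Qed.

Lemma Ip_range beta t R1 P W : is_channel W -> (forall n, is_dist (P n)) -> 0 <= Ip beta t R1 P W <= 1.
Proof. intros HW HP. apply (lsR_eq _ 0 1). intros; apply pb_bounds; auto. Qed.
Lemma Jp_range beta t R1 P Q W : is_channel W -> (forall n, is_dist (P n)) -> 0 <= Jp beta t R1 P Q W <= 1.
Proof. intros HW HP. apply (lsR_eq (prob_below beta R1 t W P Q) 0 1). intros; apply pb_bounds; auto. Qed.

Section Main.
Variables (beta : R) (W : nat -> nat -> nat -> R) (c : nat -> nat -> R) (K R1 : R).
Hypothesis Hb : 0 < beta.
Hypothesis HW : is_channel W.

Definition gI R2 P := fun gm => Ip beta (R2 - gm) R1 P W.
Definition LI R2 P := lim_down0 (gI R2 P).

Lemma LI_spec R2 P : (forall n, is_dist (P n)) ->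
  (forall gm, 0 < gm -> gI R2 P gm <= LI R2 P) /\
  (forall b, (forall gm, 0 < gm -> gI R2 P gm <= b) -> LI R2 P <= b).
Proof.
  intros HP. apply (lim_down0_mono _ 1).
  - intros g1 g2 Hg. unfold gI. apply Ip_mono; auto. lra.
  - intros; apply Ip_range; auto.
Qed.

Definition empP (Phi : nat -> code) := fun n => emp (Phi n).

Lemma empP_Pc Phi : (forall n, valid_code c K n (Phi n)) -> in_Pc c K (empP Phi).
Proof. intros H n. apply (emp_Pc c K n); auto. Qed.

Lemma conv_ev Phi r t a : (forall n, valid_code c K n (Phi n)) ->
  leER (Fin r) (liminfER (fun n => rate2 beta R1 n (Phi n))) ->
  leER (limsupER (fun n => Perr W n (Phi n))) (Fin a) -> t < r ->
  Ip beta t R1 (empP Phi) W <= a.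
Proof.
  intros HPhi Hr Ha Ht.
  assert (HP : forall n, is_dist (empP Phi n)) by (intros n; apply (empP_Pc Phi HPhi n)).
  unfold Ip. fold (lsR (prob_below beta R1 t W (empP Phi) (outdist W (empP Phi)))).
  apply (lsR_le _ 0 1). intros; apply pb_bounds; auto.
  intros g Hg.
  destruct (ev_and _ _ (liminf_ev _ _ Hr ((r - t)/2) ltac:(lra))
              (ev_and _ _ (limsup_ev _ _ Ha (g/2) ltac:(lra))
                          (exp_small beta ((r - t)/2) (g/2) Hb ltac:(lra) ltac:(lra)))) as [N HN].
  exists N. intros n Hn. destruct (HN n Hn) as [H1 [H2 H3]].
  pose proof (converse beta R1 t W (empP Phi) c K n (Phi n) HW (HPhi n) eq_refl).
  assert (exp (- (Rpower (INR n) beta * (rate2 beta R1 n (Phi n) - t))) <= exp (- (Rpower (INR n) beta * ((r - t) / 2)))).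
  { apply exp_le_exp. pose proof (spos n beta). nra. }
  lra.
Qed.

Lemma conv_Cp R2 Phi : (forall n, valid_code c K n (Phi n)) ->
  leER (Fin R2) (liminfER (fun n => rate2 beta R1 n (Phi n))) ->
  leER (Fin (LI R2 (empP Phi))) (limsupER (fun n => Perr W n (Phi n))).
Proof.
  intros HPhi Hr.
  destruct (limsup_bdd (fun n => Perr W n (Phi n)) 0 1) as [p [Hp _]].
  intros; apply (Perr_bounds W c K); auto.
  rewrite Hp. simpl.
  apply (proj2 (LI_spec R2 (empP Phi) (fun n => proj1 (empP_Pc Phi HPhi n)))).
  intros gm Hgm. unfold gI. apply (conv_ev Phi R2); auto. rewrite Hp; apply leER_refl. lra.
Qed.

Lemma conv_C eps Phi : (forall n, valid_code c K n (Phi n)) ->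
  leER (limsupER (fun n => Perr W n (Phi n))) (Fin eps) ->
  leER (liminfER (fun n => rate2 beta R1 n (Phi n))) (Iinf beta eps R1 (empP Phi) W).
Proof.
  intros HPhi He. apply leER_approx. intros r Hr g Hg.
  apply sup_ub. exists (r - g); split; auto.
  apply (conv_ev Phi r); auto. lra.
Qed.

End Main.

Fixpoint kfun (T : nat -> nat) (n : nat) : nat :=
  match n with O => O | S m => if Nat.leb (T (S (kfun T m))) (S m) then S (kfun T m) else kfun T m end.

Lemma kfun_inv T n : kfun T n = O \/ (T (kfun T n) <= n)%nat.
Proof.
  induction n; simpl; auto.
  destruct (Nat.leb (T (S (kfun T n))) (S n)) eqn:E.
  - right. apply Nat.leb_le in E; auto.
  - destruct IHn; auto.
Qed.

Lemma kfun_mono T a b : (a <= b)%nat -> (kfun T a <= kfun T b)%nat.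
Proof.
  induction 1; auto. simpl. destruct Nat.leb; lia.
Qed.

Lemma kfun_unb T K : exists n, (K <= kfun T n)%nat.
Proof.
  induction K. exists O; lia.
  destruct IHK as [n Hn].
  set (m := max n (T (S K))).
  assert (Hm : (K <= kfun T m)%nat) by (eapply Nat.le_trans; [exact Hn|apply kfun_mono; lia]).
  destruct (Nat.eq_dec (kfun T m) K) as [E|E].
  - exists (S m). simpl. rewrite E.
    assert (Nat.leb (T (S K)) (S m) = true) by (apply Nat.leb_le; lia). rewrite H. lia.
  - exists m; lia.
Qed.

Lemma kfun_ev T K : exists N, forall n, (N <= n)%nat -> (K <= kfun T n)%nat.
Proof.
  destruct (kfun_unb T K) as [N HN]. exists N. intros n Hn.
  eapply Nat.le_trans; [exact HN|]. apply kfun_mono; auto.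
Qed.

Lemma small_inv g : 0 < g -> exists K, (1 <= K)%nat /\ / INR (S K) <= g.
Proof.
  intros Hg. destruct (archimed_cor1 g Hg) as [N [HN HN0]]. exists N. split; [lia|].
  assert (0 < INR N) by (apply lt_0_INR; lia).
  assert (INR N <= INR (S N)) by (apply le_INR; lia).
  assert (/ INR (S N) <= / INR N) by (apply Rinv_le_contravar; auto). lra.
Qed.

Section Ach.
Variables (beta : R) (W : nat -> nat -> nat -> R) (c : nat -> nat -> R) (K R1 : R).
Hypothesis Hb : 0 < beta.
Hypothesis HW : is_channel W.
Hypothesis HK : forall n, exists x, in_cost c K n x.

Definition gam (k : nat) := / INR (S k).
Lemma gam_pos k : 0 < gam k.
Proof. unfold gam. apply Rinv_0_lt_compat, lt_0_INR; lia. Qed.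
Lemma gam_anti k k' : (k <= k')%nat -> gam k' <= gam k.
Proof. intros H. unfold gam. apply Rinv_le_contravar. apply lt_0_INR; lia. apply le_INR; lia. Qed.

Lemma ach_Cp R2 P : in_Pc c K P ->
  exists Phi, (forall n, valid_code c K n (Phi n)) /\
    leER (Fin R2) (liminfER (fun n => rate2 beta R1 n (Phi n))) /\
    leER (limsupER (fun n => Perr W n (Phi n))) (Fin (LI beta W R1 R2 P)).
Proof.
  intros HP. set (L := LI beta W R1 R2 P).
  assert (HPd : forall n, is_dist (P n)) by (intros; apply HP).
  destruct (LI_spec beta W R1 HW R2 P HPd) as [HL1 _]. fold L in HL1.
  assert (HT : forall k, exists N, forall n, (N <= n)%nat ->
     prob_below beta R1 (R2 - gam k) W P (outdist W P) n <= L + gam k /\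
     (exp (- (Rpower (INR n) beta * (gam k / 2))) <= gam k /\ ln 2 / Rpower (INR n) beta <= gam k)).
  { intros k. pose proof (gam_pos k).
    apply ev_and; [|apply ev_and; [apply exp_small|apply ln2_small]; auto; lra].
    destruct (lsR_ev (prob_below beta R1 (R2 - gam k) W P (outdist W P)) 0 1 (fun n => pb_bounds _ _ _ _ _ _ _ HW (HPd n)) (gam k) (gam_pos k)) as [N HN].
    exists N. intros n Hn. specialize (HN n Hn). specialize (HL1 (gam k) (gam_pos k)).
    unfold gI, Ip in HL1. fold (lsR (prob_below beta R1 (R2 - gam k) W P (outdist W P))) in HL1. lra. }
  destruct (choice _ HT) as [T HTT].
  assert (HF : forall n, exists F, valid_code c K n F /\
    (R2 - 2 * gam (kfun T n)) - ln 2 / Rpower (INR n) beta <= rate2 beta R1 n F /\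
    Perr W n F <= prob_below beta R1 (R2 - gam (kfun T n)) W P (outdist W P) n +
                  exp (- (Rpower (INR n) beta * (gam (kfun T n) / 2)))).
  { intros n. destruct (achieve beta R1 W P c K n (R2 - 2 * gam (kfun T n)) (gam (kfun T n) / 2) HW (HPd n) (proj2 (HP n)) (HK n)) as [F [H1 [H2 H3]]].
    pose proof (gam_pos (kfun T n)); lra.
    exists F; split; auto; split; auto.
    replace (R2 - gam (kfun T n)) with (R2 - 2 * gam (kfun T n) + 2 * (gam (kfun T n) / 2)) by field. auto. }
  destruct (choice _ HF) as [Phi HPhi].
  exists Phi. split; [intros; apply HPhi|].
  assert (Hgood : forall g, 0 < g -> exists N, forall n, (N <= n)%nat ->
     R2 - g <= rate2 beta R1 n (Phi n) /\ Perr W n (Phi n) <= L + g).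
  { intros g Hg. destruct (small_inv (g / 3) ltac:(lra)) as [K0 [HK0 HK0']].
    destruct (kfun_ev T K0) as [N HN]. exists N. intros n Hn.
    specialize (HN n Hn). set (k := kfun T n) in *.
    destruct (kfun_inv T n) as [E|E]; [fold k in E; lia|]. fold k in E.
    destruct (HTT k n E) as [Ha [Hb' Hc]]. destruct (HPhi n) as [_ [Hr Hp]]. fold k in Hr, Hp.
    pose proof (gam_anti K0 k HN). unfold gam in H at 2. split; lra. }
  split.
  - apply liminf_ge. intros g Hg. destruct (Hgood g Hg) as [N HN]. exists N; intros; apply HN; auto.
  - apply limsup_le. intros g Hg. destruct (Hgood g Hg) as [N HN]. exists N; intros; apply HN; auto.
Qed.

Lemma ach_C eps R2 P eta : in_Pc c K P -> Ip beta R2 R1 P W <= eps -> 0 < eta ->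
  leER (Fin (R2 - eta)) (Ccap beta eps R1 W c K).
Proof.
  intros HP HI He.
  assert (HPd : forall n, is_dist (P n)) by (intros; apply HP).
  assert (HF : forall n, exists F, valid_code c K n F /\
    (R2 - eta) - ln 2 / Rpower (INR n) beta <= rate2 beta R1 n F /\
    Perr W n F <= prob_below beta R1 (R2 - eta / 2) W P (outdist W P) n +
                  exp (- (Rpower (INR n) beta * (eta / 4)))).
  { intros n. destruct (achieve beta R1 W P c K n (R2 - eta) (eta / 4) HW (HPd n) (proj2 (HP n)) (HK n)) as [F [H1 [H2 H3]]].
    lra. exists F; split; auto; split; auto.
    replace (R2 - eta / 2) with (R2 - eta + 2 * (eta / 4)) by field. auto. }
  destruct (choice _ HF) as [Phi HPhi].
  eapply leER_trans; [|apply sup_ub; exists Phi; split; [intros; apply HPhi|split; [|reflexivity]]].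
  - apply liminf_ge. intros g Hg. destruct (ln2_small beta g Hb Hg) as [N HN]. exists N. intros n Hn.
    specialize (HN n Hn). destruct (HPhi n) as [_ [H _]]. lra.
  - apply limsup_le. intros g Hg.
    destruct (ev_and _ _ (lsR_ev (prob_below beta R1 R2 W P (outdist W P)) 0 1 (fun n => pb_bounds _ _ _ _ _ _ _ HW (HPd n)) (g/2) ltac:(lra))
                (exp_small beta (eta / 4) (g / 2) Hb ltac:(lra) ltac:(lra))) as [N HN].
    exists N. intros n Hn. destruct (HN n Hn) as [H1 H2]. destruct (HPhi n) as [_ [_ H3]].
    pose proof (pb_mono beta R1 (R2 - eta/2) R2 W P (outdist W P) n HW (HPd n) ltac:(lra)).
    unfold Ip in HI. fold (lsR (prob_below beta R1 R2 W P (outdist W P))) in HI. lra.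
Qed.

End Ach.

Section Q.
Variables (beta : R) (W : nat -> nat -> nat -> R) (c : nat -> nat -> R) (K R1 : R).
Hypothesis Hb : 0 < beta.
Hypothesis HW : is_channel W.

Lemma JI_lim P Q t g : (forall n, is_dist (P n)) -> is_dist_seq Q -> 0 < g ->
  Jp beta t R1 P Q W <= Ip beta (t + g) R1 P W.
Proof.
  intros HP HQ Hg. unfold Jp, Ip.
  fold (lsR (prob_below beta R1 t W P Q)). fold (lsR (prob_below beta R1 (t + g) W P (outdist W P))).
  apply (lsR_le _ 0 1). intros; apply pb_bounds; auto.
  intros h Hh.
  destruct (ev_and _ _ (lsR_ev (prob_below beta R1 (t + g) W P (outdist W P)) 0 1 (fun n => pb_bounds _ _ _ _ _ _ _ HW (HP n)) (h/2) ltac:(lra))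
              (exp_small beta g (h / 2) Hb Hg ltac:(lra))) as [N HN].
  exists N. intros n Hn. destruct (HN n Hn) as [H1 H2].
  pose proof (JI_bound beta R1 t g W P Q n HW (HP n) (HQ n) Hg). lra.
Qed.

Lemma outdist_seq P : (forall n, is_dist (P n)) -> is_dist_seq (outdist W P).
Proof. intros HP n. apply (outd_spec (P n) (W n)); auto. Qed.

Lemma partF R2 P : (forall n, is_dist (P n)) ->
  supER (fun b => exists Q, is_dist_seq Q /\
          b = Fin (lim_down0 (fun gamma => Jp beta (R2 - gamma) R1 P Q W))) =
  Fin (lim_down0 (fun gamma => Ip beta (R2 - gamma) R1 P W)).
Proof.
  intros HP. apply leER_antisym.
  - apply sup_least. intros x [Q [HQ ->]]. simpl.
    destruct (LI_spec beta W R1 HW R2 P HP) as [HL1 _].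
    apply (lim_down0_mono _ 1).
    + intros g1 g2 Hg. apply Jp_mono; auto. lra.
    + intros; apply Jp_range; auto.
    + intros gm Hgm. eapply Rle_trans. apply (JI_lim P Q _ (gm / 2)); auto. lra.
      replace (R2 - gm + gm / 2) with (R2 - gm / 2) by field.
      apply (HL1 (gm / 2)). lra.
  - apply sup_ub. exists (outdist W P). split; auto. apply outdist_seq; auto.
Qed.

Lemma partG eps P : (forall n, is_dist (P n)) ->
  infER (fun b => exists Q, is_dist_seq Q /\ b = Jinf beta eps R1 P Q W) = Iinf beta eps R1 P W.
Proof.
  intros HP. apply leER_antisym.
  - apply inf_lb. exists (outdist W P). split; auto. apply outdist_seq; auto.
  - apply inf_greatest. intros x [Q [HQ ->]].
    apply sup_least. intros x [R2 [-> HR2]].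
    apply Fin_eps_le. intros g Hg. apply sup_ub. exists (R2 - g); split; auto.
    eapply Rle_trans. apply (JI_lim P Q _ (g / 2)); auto. lra.
    eapply Rle_trans; [|exact HR2]. apply Ip_mono; auto. lra.
Qed.

End Q.

Theorem mainTheorem9 (beta : R) (hbeta : 0 < beta < 1)
  (W : nat -> nat -> nat -> R) (hW : is_channel W)
  (c : nat -> nat -> R) (K : R) (hK : forall n, exists x, in_cost c K n x)
  (R1 R2 : R) :
  (Cp beta R2 R1 W c K =
     infER (fun a => exists P, in_Pc c K P /\
              a = Fin (lim_down0 (fun gamma => Ip beta (R2 - gamma) R1 P W))) /\
   Cp beta R2 R1 W c K =
     infER (fun a => exists P, in_Pc c K P /\
              a = supER (fun b => exists Q, is_dist_seq Q /\
                    b = Fin (lim_down0 (fun gamma => Jp beta (R2 - gamma) R1 P Q W))))) /\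
  (forall eps, 0 <= eps < 1 ->
     Ccap beta eps R1 W c K = supER (fun a => exists P, in_Pc c K P /\ a = Iinf beta eps R1 P W) /\
     Ccap beta eps R1 W c K =
       supER (fun a => exists P, in_Pc c K P /\
                a = infER (fun b => exists Q, is_dist_seq Q /\ b = Jinf beta eps R1 P Q W))).
Proof.
  destruct hbeta as [Hb _].
  assert (Hcp : Cp beta R2 R1 W c K =
     infER (fun a => exists P, in_Pc c K P /\
              a = Fin (lim_down0 (fun gamma => Ip beta (R2 - gamma) R1 P W)))).
  { apply leER_antisym.
    - apply inf_greatest. intros x [P [HP ->]].
      destruct (ach_Cp beta W c K R1 Hb hW hK R2 P HP) as [Phi [H1 [H2 H3]]].
      eapply leER_trans; [|exact H3]. apply inf_lb. exists Phi; auto.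
    - apply inf_greatest. intros x [Phi [H1 [H2 ->]]].
      eapply leER_trans; [|apply (conv_Cp beta W c K R1 Hb hW R2 Phi H1 H2)].
      apply inf_lb. exists (empP Phi). split; [apply empP_Pc; auto|]. reflexivity. }
  split; [split|].
  - exact Hcp.
  - rewrite Hcp. apply leER_antisym.
    + apply inf_greatest. intros x [P [HP ->]].
      rewrite (partF beta W R1 Hb hW R2 P (fun n => proj1 (HP n))).
      apply inf_lb. exists P; auto.
    + apply inf_greatest. intros x [P [HP ->]].
      rewrite <- (partF beta W R1 Hb hW R2 P (fun n => proj1 (HP n))).
      apply inf_lb. exists P; auto.
  - intros eps Heps.
    assert (Hc : Ccap beta eps R1 W c K = supER (fun a => exists P, in_Pc c K P /\ a = Iinf beta eps R1 P W)).
    { apply leER_antisym.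
      - apply sup_least. intros x [Phi [H1 [H2 ->]]].
        eapply leER_trans. apply (conv_C beta W c K R1 Hb hW eps Phi H1 H2).
        apply sup_ub. exists (empP Phi). split; auto. apply empP_Pc; auto.
      - apply sup_least. intros x [P [HP ->]].
        apply sup_least. intros x [R2' [-> HR2]].
        apply Fin_eps_le. intros g Hg. apply (ach_C beta W c K R1 Hb hW hK eps R2' P g HP HR2 Hg). }
    split; auto. rewrite Hc. apply leER_antisym.
    + apply sup_least. intros x [P [HP ->]].
      rewrite <- (partG beta W R1 Hb hW eps P (fun n => proj1 (HP n))).
      apply sup_ub. exists P; auto.
    + apply sup_least. intros x [P [HP ->]].
      rewrite (partG beta W R1 Hb hW eps P (fun n => proj1 (HP n))).
      apply sup_ub. exists P; auto.
Qed.
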